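(* Let $0<T^\star<+\infty$ and let $(g,K,F,E,u,\Theta,\rho,e)$ be a $C^1$ solution of the evolution system (S) on $[0,T^\star)$, with $g$ positive definite, $\rho>0$, $e\ge0$, $\Theta^{00}\ge0$, satisfying the constraints (C1)–(C4) for all $t\in[0,T^\star)$. If the mean curvature $H=g^{ij}K_{ij}$ is bounded on $[0,T^\star)$, then $g$, $K$, $F$, $E$, $u$, $\Theta$, $\rho$, $e$, $(\det g)^{-1}$, $u^0=\sqrt{1+g_{ij}u^iu^j}$ and $1/\rho$ are all bounded on $[0,T^\star)$.
   Context: Setting. $G$ is a three-dimensional connected Lie group of Bianchi type I–VIII, $(e_i)_{i=1,2,3}$ a left-invariant frame with structure constants $C^k_{ij}$ defined by $[e_i,e_j]=C^k_{ij}e_k$ (so $C^k_{ij}=-C^k_{ji}$ and the Jacobi identity holds). $\Lambda\in\mathbb{R}$ is a constant. Latin indices run over $1,2,3$; repeated indices are summed. Unknowns (functions of $t$): a symmetric positive definite matrix $g=(g_{ij})$ with inverse $(g^{ij})$; a symmetric matrix $K=(K_{ij})$; an antisymmetric matrix $F=(F_{ij})$; vectors $E=(E^i)$, $u=(u^i)$; $\Theta=(\Theta^{00},\Theta^{0i})$; a function $\rho>0$; a function $e\ge0$. Derived quantities: $u^0=\sqrt{1+g_{ij}u^iu^j}$, $u_i=g_{ij}u^j$; $H=g^{ij}K_{ij}$; $K^i_j=g^{ik}K_{kj}$, $K^{ij}=g^{ik}g^{jl}K_{kl}$; $F^{ij}=g^{ik}g^{jl}F_{kl}$; $\gamma^l_{ij}=\tfrac12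 g^{lk}(-C^m_{jk}g_{im}+C^m_{ki}g_{jm}+C^m_{ij}g_{km})$; $R_{ij}=\gamma^l_{lm}\gamma^m_{ji}-\gamma^m_{jl}\gamma^l_{mi}-C^l_{mj}\gamma^m_{li}$, $R=g^{ij}R_{ij}$; $\tau_{00}=\tfrac12 g_{ij}E^iE^j+\tfrac14 g^{ik}g^{jl}F_{kl}F_{ij}$, $\tau_{0j}=-E^kF_{jk}$, $\tau_{ij}=(\tfrac12 g_{ij}g_{kl}-g_{ik}g_{jl})E^kE^l-\tfrac14 g_{ij}g^{km}g^{nl}F_{kl}F_{mn}+g^{kl}F_{ik}F_{jl}$; $\Theta_{00}=\Theta^{00}$, $\Theta_{0j}=-g_{jk}\Theta^{0k}$; $T_{00}=\tfrac43\rho(u^0)^2+\Theta_{00}$, $T_{0j}=-\tfrac43\rho u^0u_j+\Theta_{0j}$, $T_{ij}=\tfrac43\rho u_iu_j+\tfrac13\rho g_{ij}$; $\nabla$ is the Levi-Civita connection of the left-invariant metric $g$, so for left-invariant tensors $\nabla_kK_{ij}=-\gamma^l_{ki}K_{lj}-\gamma^l_{kj}K_{il}$ and $\nabla^iK_{ij}=g^{ik}\nabla_kK_{ij}$. Evolution system (S) (dot $=d/dt$): $\dot g_{ij}=-2K_{ij}$; $\dot K_{ij}=R_{ij}+HK_{ij}-2K^l_jK_{il}-8\pi(\tau_{ij}+T_{ij})+4\pi(-T_{00}+g^{lm}T_{lm})g_{ij}-\Lambda g_{ij}$; $\dot F_{ij}=C^k_{ij}g_{kl}E^l$; $\dot E^i=HE^i-C^j_{jk}E^k\frac{u^i}{u^0}-C^j_{jk}g^{kl}g^{im}F_{lm}-\tfrac12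 C^i_{jk}g^{jl}g^{km}F_{lm}$; $\dot u^i=2K^i_ju^j-\gamma^i_{jk}\frac{u^ju^k}{u^0}+\frac{3}{4\rho u^0}C^j_{jk}E^kE^i-\frac{3}{4\rho(u^0)^2}C^j_{jk}E^kg^{il}F_{ml}u^m$; $\dot\Theta^{00}=H\Theta^{00}-C^i_{ij}\Theta^{0j}+\tfrac13\rho H+\rho u^0$; $\dot\Theta^{0i}=H\Theta^{0i}+2K^i_j\Theta^{0j}-\tfrac{\rho}{3}(C^k_{kj}g^{ij}+\gamma^i_{jk}g^{jk})+\rho u^i$; $\dot\rho=-\big(\frac{3}{4u^0}+K_{ij}\frac{u^iu^j}{(u^0)^2}-H+C^i_{ij}\frac{u^j}{u^0}\big)\rho-\tfrac34 g_{il}C^j_{jk}E^kE^l\frac{u^i}{(u^0)^3}$; $\dot e=-\big(K_{ij}\frac{u^iu^j}{(u^0)^2}+C^i_{ik}\frac{u^k}{u^0}-H\big)e+\tfrac34 g_{ij}\frac{u^iE^j}{(u^0)^2}\frac{e^2}{\rho}$. Constraints: (C1) $R-K_{ij}K^{ij}+H^2=16\pi(\tau_{00}+T_{00})+2\Lambda$; (C2) $\nabla^iK_{ij}=-8\pi(\tau_{0j}+T_{0j})$; (C3) $C^l_{ij}F_{kl}+C^l_{jk}F_{il}+C^l_{ki}F_{jl}=0$; (C4) $C^i_{ik}E^k+eu^0=0$. Model assumption: $\Theta^{00}\ge0$ (in the model $\Theta_{00}=(z_0)^2$ for a future-pointing vector $z$). For Bianchi types I–VIII the scalar curvature satisfies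 $R\le0$. *)

(* Defs.v *)
(* real numbers (Reals). Indices i = 0,1,2 (nat) stand for 1,2,3. *)
From Stdlib Require Import Reals Lra.
Open Scope R_scope.

Definition mat := nat -> nat -> R.
Definition vec := nat -> R.
(* structure constants: C k i j = C^k_{ij},  [e_i,e_j] = C^k_{ij} e_k *)
Definition sconst := nat -> nat -> nat -> R.

Definition sum3 (f : nat -> R) : R := f 0%nat + f 1%nat + f 2%nat.

Definition eps3 (i j k : nat) : R :=
  match i, j, k with
  | O, S O, S (S O) | S O, S (S O), O | S (S O), O, S O => 1
  | O, S (S O), S O | S (S O), S O, O | S O, O, S (S O) => -1
  | _, _, _ => 0
  end.

Definition kdelta (i j : nat) : R := if Nat.eqb i j then 1 else 0.

Definition det3 (g : mat) : R :=
  sum3 (fun i => sum3 (fun j => sum3 (fun k =>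
    eps3 i j k * g 0%nat i * g 1%nat j * g 2%nat k))).

(* g^{ij} = adj(g)_{ij} / det g, adj via cofactors *)
Definition ginv (g : mat) : mat := fun i j =>
  / det3 g * (1/2) * sum3 (fun m => sum3 (fun n => sum3 (fun p => sum3 (fun q =>
    eps3 j m n * eps3 i p q * g m p * g n q)))).

Definition sym3 (A : mat) : Prop := forall i j, (i < 3)%nat -> (j < 3)%nat -> A i j = A j i.
Definition antisym3 (A : mat) : Prop := forall i j, (i < 3)%nat -> (j < 3)%nat -> A i j = - A j i.
Definition posdef3 (g : mat) : Prop :=
  forall v : vec, (v 0%nat <> 0 \/ v 1%nat <> 0 \/ v 2%nat <> 0) ->
    sum3 (fun i => sum3 (fun j => g i j * v i * v j)) > 0.

Definition C_antisym (C : sconst) : Prop :=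
  forall k i j, (k < 3)%nat -> (i < 3)%nat -> (j < 3)%nat -> C k i j = - C k j i.
Definition C_jacobi (C : sconst) : Prop :=
  forall i j k l, (i < 3)%nat -> (j < 3)%nat -> (k < 3)%nat -> (l < 3)%nat ->
    sum3 (fun m => C m i j * C l m k + C m j k * C l m i + C m k i * C l m j) = 0.
(* Bianchi type IX: the Lie algebra is isomorphic to so(3) = su(2), i.e. in some
   frame e'_a = A^i_a e_i (with inverse B) the structure constants are eps_{abc}. *)
Definition bianchi_IX (C : sconst) : Prop :=
  exists A B : mat,
    (forall i j, (i < 3)%nat -> (j < 3)%nat -> sum3 (fun k => A i k * B k j) = kdelta i j) /\
    (forall a b c, (a < 3)%nat -> (b < 3)%nat -> (c < 3)%nat ->
       sum3 (fun k => B c k * sum3 (fun i => sum3 (fun j => A i a * A j b * C k i j)))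
       = eps3 a b c).
(* every real 3-dim Lie algebra is of Bianchi type I..IX; types I-VIII = not IX *)
Definition bianchi_I_VIII (C : sconst) : Prop :=
  C_antisym C /\ C_jacobi C /\ ~ bianchi_IX C.

Definition u0 (g : mat) (u : vec) : R :=
  sqrt (1 + sum3 (fun i => sum3 (fun j => g i j * u i * u j))).
Definition lowr (g : mat) (u : vec) : vec := fun i => sum3 (fun j => g i j * u j).
Definition Hmc (g K : mat) : R := sum3 (fun i => sum3 (fun j => ginv g i j * K i j)).
Definition Kud (g K : mat) : mat := fun i j => sum3 (fun k => ginv g i k * K k j).
Definition Kuu (g K : mat) : mat := fun i j =>
  sum3 (fun k => sum3 (fun l => ginv g i k * ginv g j l * K k l)).
Definition gam (C : sconst) (g : mat) (l i j : nat) : R :=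
  (1/2) * sum3 (fun k => ginv g l k *
     (- sum3 (fun m => C m j k * g i m) + sum3 (fun m => C m k i * g j m)
      + sum3 (fun m => C m i j * g k m))).
Definition Ric (C : sconst) (g : mat) : mat := fun i j =>
  sum3 (fun l => sum3 (fun m => gam C g l l m * gam C g m j i))
  - sum3 (fun l => sum3 (fun m => gam C g m j l * gam C g l m i))
  - sum3 (fun l => sum3 (fun m => C l m j * gam C g m l i)).
Definition Rsc (C : sconst) (g : mat) : R :=
  sum3 (fun i => sum3 (fun j => ginv g i j * Ric C g i j)).

Definition tau00 (g : mat) (E : vec) (F : mat) : R :=
  (1/2) * sum3 (fun i => sum3 (fun j => g i j * E i * E j))
  + (1/4) * sum3 (fun i => sum3 (fun j => sum3 (fun k => sum3 (fun l =>
       ginv g i k * ginv g j l * F k l * F i j)))).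
Definition tau0 (E : vec) (F : mat) : vec := fun j => - sum3 (fun k => E k * F j k).
Definition tauij (g : mat) (E : vec) (F : mat) : mat := fun i j =>
  sum3 (fun k => sum3 (fun l => ((1/2) * g i j * g k l - g i k * g j l) * E k * E l))
  - (1/4) * g i j * sum3 (fun k => sum3 (fun m => sum3 (fun n => sum3 (fun l =>
       ginv g k m * ginv g n l * F k l * F m n))))
  + sum3 (fun k => sum3 (fun l => ginv g k l * F i k * F j l)).

Definition T00 (g : mat) (u : vec) (rho Th00 : R) : R :=
  4/3 * rho * (u0 g u)^2 + Th00.
Definition T0 (g : mat) (u : vec) (rho : R) (Th0 : vec) : vec := fun j =>
  - (4/3) * rho * u0 g u * lowr g u j - sum3 (fun k => g j k * Th0 k).
Definition Tij (g : mat) (u : vec) (rho : R) : mat := fun i j =>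
  4/3 * rho * lowr g u i * lowr g u j + (1/3) * rho * g i j.

(* nabla^i K_{ij} for the left-invariant tensor K *)
Definition divK (C : sconst) (g K : mat) : vec := fun j =>
  sum3 (fun i => sum3 (fun k => ginv g i k *
     (- sum3 (fun l => gam C g l k i * K l j) - sum3 (fun l => gam C g l k j * K i l)))).

Definition trC (C : sconst) (k : nat) : R := sum3 (fun j => C j j k).
Definition CE (C : sconst) (E : vec) : R := sum3 (fun k => trC C k * E k).

Definition rhs_g (K : mat) : mat := fun i j => -2 * K i j.
Definition rhs_K (C : sconst) (Lam : R) (g K F : mat) (E u : vec) (rho Th00 : R) (Th0 : vec)
  : mat := fun i j =>
  Ric C g i j + Hmc g K * K i j - 2 * sum3 (fun l => Kud g K l j * K i l)
  - 8 * PI * (tauij g E F i j + Tij g u rho i j)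
  + 4 * PI * (- T00 g u rho Th00
              + sum3 (fun l => sum3 (fun m => ginv g l m * Tij g u rho l m))) * g i j
  - Lam * g i j.
Definition rhs_F (C : sconst) (g : mat) (E : vec) : mat := fun i j =>
  sum3 (fun k => C k i j * sum3 (fun l => g k l * E l)).
Definition rhs_E (C : sconst) (g K F : mat) (E u : vec) : vec := fun i =>
  Hmc g K * E i - CE C E * u i / u0 g u
  - sum3 (fun k => sum3 (fun l => sum3 (fun m => trC C k * ginv g k l * ginv g i m * F l m)))
  - (1/2) * sum3 (fun j => sum3 (fun k => sum3 (fun l => sum3 (fun m =>
        C i j k * ginv g j l * ginv g k m * F l m)))).
Definition rhs_u (C : sconst) (g K F : mat) (E u : vec) (rho : R) : vec := fun i =>
  2 * sum3 (fun j => Kud g K i j * u j)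
  - sum3 (fun j => sum3 (fun k => gam C g i j k * u j * u k)) / u0 g u
  + 3 / (4 * rho * u0 g u) * CE C E * E i
  - 3 / (4 * rho * (u0 g u)^2) * CE C E *
      sum3 (fun l => sum3 (fun m => ginv g i l * F m l * u m)).
Definition rhs_Th00 (C : sconst) (g K : mat) (u : vec) (rho Th00 : R) (Th0 : vec) : R :=
  Hmc g K * Th00 - sum3 (fun i => sum3 (fun j => C i i j * Th0 j))
  + (1/3) * rho * Hmc g K + rho * u0 g u.
Definition rhs_Th0 (C : sconst) (g K : mat) (u : vec) (rho : R) (Th0 : vec) : vec := fun i =>
  Hmc g K * Th0 i + 2 * sum3 (fun j => Kud g K i j * Th0 j)
  - rho / 3 * (sum3 (fun j => trC C j * ginv g i j)
               + sum3 (fun j => sum3 (fun k => gam C g i j k * ginv g j k)))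
  + rho * u i.
Definition rhs_rho (C : sconst) (g K : mat) (E u : vec) (rho : R) : R :=
  - (3 / (4 * u0 g u)
     + sum3 (fun i => sum3 (fun j => K i j * u i * u j)) / (u0 g u)^2
     - Hmc g K + sum3 (fun j => trC C j * u j) / u0 g u) * rho
  - 3/4 * sum3 (fun i => sum3 (fun l => g i l * CE C E * E l * u i)) / (u0 g u)^3.
Definition rhs_e (C : sconst) (g K : mat) (E u : vec) (rho e : R) : R :=
  - (sum3 (fun i => sum3 (fun j => K i j * u i * u j)) / (u0 g u)^2
     + sum3 (fun k => trC C k * u k) / u0 g u - Hmc g K) * e
  + 3/4 * sum3 (fun i => sum3 (fun j => g i j * u i * E j)) / (u0 g u)^2 * (e^2 / rho).

Definition constraint1 (C : sconst) (Lam : R) (g K F : mat) (E u : vec) (rho Th00 : R) : Prop :=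
  Rsc C g - sum3 (fun i => sum3 (fun j => K i j * Kuu g K i j)) + (Hmc g K)^2
  = 16 * PI * (tau00 g E F + T00 g u rho Th00) + 2 * Lam.
Definition constraint2 (C : sconst) (g K F : mat) (E u : vec) (rho : R) (Th0 : vec) : Prop :=
  forall j, (j < 3)%nat -> divK C g K j = - 8 * PI * (tau0 E F j + T0 g u rho Th0 j).
Definition constraint3 (C : sconst) (F : mat) : Prop :=
  forall i j k, (i < 3)%nat -> (j < 3)%nat -> (k < 3)%nat ->
    sum3 (fun l => C l i j * F k l + C l j k * F i l + C l k i * F j l) = 0.
Definition constraint4 (C : sconst) (g : mat) (E u : vec) (e : R) : Prop :=
  CE C E + e * u0 g u = 0.

Definition deriv_on (f f' : R -> R) (T : R) : Prop :=
  forall t, 0 <= t < T -> forall epsilon, epsilon > 0 -> exists delta, delta > 0 /\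
    forall h, h <> 0 -> Rabs h < delta -> 0 <= t + h < T ->
      Rabs ((f (t + h) - f t) / h - f' t) < epsilon.
Definition cont_on (f : R -> R) (T : R) : Prop :=
  forall t, 0 <= t < T -> forall epsilon, epsilon > 0 -> exists delta, delta > 0 /\
    forall s, Rabs (s - t) < delta -> 0 <= s < T -> Rabs (f s - f t) < epsilon.
Definition C1_on (f f' : R -> R) (T : R) : Prop := deriv_on f f' T /\ cont_on f' T.

Definition bounded_on (f : R -> R) (T : R) : Prop :=
  exists M, forall t, 0 <= t < T -> Rabs (f t) <= M.
Definition vbounded_on (f : R -> vec) (T : R) : Prop :=
  forall i, (i < 3)%nat -> bounded_on (fun t => f t i) T.
Definition mbounded_on (f : R -> mat) (T : R) : Prop :=
  forall i j, (i < 3)%nat -> (j < 3)%nat -> bounded_on (fun t => f t i j) T.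

Definition solves_S (C : sconst) (Lam T : R)
  (g K F : R -> mat) (E u Th0 : R -> vec) (Th00 rho e : R -> R) : Prop :=
  (forall i j, (i < 3)%nat -> (j < 3)%nat ->
     C1_on (fun t => g t i j) (fun t => rhs_g (K t) i j) T /\
     C1_on (fun t => K t i j)
       (fun t => rhs_K C Lam (g t) (K t) (F t) (E t) (u t) (rho t) (Th00 t) (Th0 t) i j) T /\
     C1_on (fun t => F t i j) (fun t => rhs_F C (g t) (E t) i j) T) /\
  (forall i, (i < 3)%nat ->
     C1_on (fun t => E t i) (fun t => rhs_E C (g t) (K t) (F t) (E t) (u t) i) T /\
     C1_on (fun t => u t i) (fun t => rhs_u C (g t) (K t) (F t) (E t) (u t) (rho t) i) T /\
     C1_on (fun t => Th0 t i) (fun t => rhs_Th0 C (g t) (K t) (u t) (rho t) (Th0 t) i) T) /\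
  C1_on Th00 (fun t => rhs_Th00 C (g t) (K t) (u t) (rho t) (Th00 t) (Th0 t)) T /\
  C1_on rho (fun t => rhs_rho C (g t) (K t) (E t) (u t) (rho t)) T /\
  C1_on e (fun t => rhs_e C (g t) (K t) (E t) (u t) (rho t) (e t)) T.

(* Main.v *)
Require Import Defs.
From Stdlib Require Import Reals Lra Lia Field.
Open Scope R_scope.

Lemma dpl_ext f g x l : (forall t, f t = g t) -> derivable_pt_lim f x l -> derivable_pt_lim g x l.
Proof. intros H Hd eps He. destruct (Hd eps He) as [d Hd']. exists d. intros h H1 H2.
rewrite <- !H. apply Hd'; auto. Qed.
Lemma dpl_eq f x l l' : derivable_pt_lim f x l -> l = l' -> derivable_pt_lim f x l'.
Proof. intros H ->; exact H. Qed.
Lemma dpl_plus f g x df dg : derivable_pt_lim f x df -> derivable_pt_lim g x dg ->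
  derivable_pt_lim (fun t => f t + g t) x (df + dg).
Proof. intros; apply (derivable_pt_lim_plus f g); auto. Qed.
Lemma dpl_minus f g x df dg : derivable_pt_lim f x df -> derivable_pt_lim g x dg ->
  derivable_pt_lim (fun t => f t - g t) x (df - dg).
Proof. intros; apply (derivable_pt_lim_minus f g); auto. Qed.
Lemma dpl_mult f g x df dg : derivable_pt_lim f x df -> derivable_pt_lim g x dg ->
  derivable_pt_lim (fun t => f t * g t) x (df * g x + f x * dg).
Proof. intros; apply (derivable_pt_lim_mult f g); auto. Qed.
Lemma dpl_const c x : derivable_pt_lim (fun _ => c) x 0.
Proof. apply derivable_pt_lim_const. Qed.
Lemma dpl_id x : derivable_pt_lim (fun t => t) x 1.
Proof. apply derivable_pt_lim_id. Qed.
Lemma dpl_div f g x df dg : derivable_pt_lim f x df -> derivable_pt_lim g x dg -> g x <> 0 ->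
  derivable_pt_lim (fun t => f t / g t) x ((df * g x - dg * f x) / (g x)^2).
Proof. intros. eapply dpl_eq; [apply (derivable_pt_lim_div f g x df dg); auto | unfold Rsqr; cbv beta; field; auto]. Qed.
Lemma Rabs_le_inv x a : Rabs x <= a -> - a <= x <= a.
Proof. intros H. split. pose proof (Rle_abs (-x)). rewrite Rabs_Ropp in H0. lra. pose proof (Rle_abs x). lra. Qed.
Lemma dpl_expk k x : derivable_pt_lim (fun t => exp (k * t)) x (k * exp (k * x)).
Proof.
  assert (H := derivable_pt_lim_comp (fun t => k * t) exp x k (exp (k*x))).
  eapply dpl_eq. apply H.
  - eapply dpl_eq. apply (dpl_mult (fun _ => k) (fun t => t)). apply dpl_const. apply dpl_id. ring.
  - apply derivable_pt_lim_exp.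
  - ring.
Qed.
Lemma dpl_sum3 (F : R -> nat -> R) (F' : nat -> R) x :
  (forall i, (i < 3)%nat -> derivable_pt_lim (fun t => F t i) x (F' i)) ->
  derivable_pt_lim (fun t => sum3 (F t)) x (sum3 F').
Proof. intros H. unfold sum3. apply dpl_plus. apply dpl_plus. all: apply H; lia. Qed.

Lemma deriv_int f f' T t : deriv_on f f' T -> 0 < t < T -> derivable_pt_lim f t (f' t).
Proof.
  intros Hd Ht eps Heps.
  destruct (Hd t (conj (Rlt_le _ _ (proj1 Ht)) (proj2 Ht)) eps Heps) as [d [Hd0 Hd1]].
  assert (Hp : 0 < Rmin d (Rmin t (T - t))).
  { apply Rmin_pos; auto. apply Rmin_pos; lra. }
  exists (mkposreal _ Hp). simpl. intros h Hh Hh'.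
  assert (Hm1 := Rmin_l d (Rmin t (T-t))). assert (Hm2 := Rmin_r d (Rmin t (T-t))).
  assert (Hm3 := Rmin_l t (T-t)). assert (Hm4 := Rmin_r t (T-t)).
  apply Hd1; auto. lra. apply Rabs_def2 in Hh'. lra.
Qed.

Lemma gron (y y' : R -> R) (a b T : R) : 0 < a -> 0 <= b ->
  (forall t, 0 < t < T -> derivable_pt_lim y t (y' t)) ->
  (forall t, 0 < t < T -> Rabs (y' t) <= a * y t + b) ->
  forall s t, 0 < s < T -> 0 < t < T -> y t + b/a <= (y s + b/a) * exp (a * Rabs (t - s)).
Proof.
  intros Ha Hb Hd Hbd s t Hs Ht.
  destruct (Rtotal_order s t) as [Hst | [Hst | Hst]].
  - set (phi := fun x => (y x + b/a) * exp ((-a) * x)).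
    set (phi' := fun x => y' x * exp ((-a) * x) + (y x + b/a) * ((-a) * exp ((-a) * x))).
    destruct (MVT_cor2 phi phi' s t Hst) as [c [Hc1 Hc2]].
    { intros c Hc. unfold phi, phi'. apply (dpl_mult (fun x => y x + b/a) (fun x => exp ((-a)*x))).
      eapply dpl_eq. apply dpl_plus. apply Hd. lra. apply dpl_const. ring. apply dpl_expk. }
    assert (Hneg : phi' c <= 0).
    { unfold phi'. assert (Hb2 := Hbd c ltac:(lra)). apply Rabs_le_inv in Hb2.
      assert (He := exp_pos ((-a)*c)).
      replace (y' c * exp (- a * c) + (y c + b / a) * (- a * exp (- a * c))) with
        ((y' c - (a * y c + b)) * exp (-a*c)) by (field; lra).
      assert (y' c - (a * y c + b) <= 0) by lra. nra. }
    assert (phi t <= phi s) by nra.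
    unfold phi in H.
    rewrite Rabs_right by lra.
    assert (E1 : exp (a * (t - s)) = exp (a*t) * exp (-a * s)).
    { rewrite <- exp_plus. f_equal. ring. }
    assert (E2 : exp (a * t) * exp (-a * t) = 1).
    { rewrite <- exp_plus. replace (a*t + -a*t) with 0 by ring. apply exp_0. }
    rewrite E1. assert (Hp := exp_pos (a*t)).
    replace (y t + b / a) with ((y t + b / a) * exp (- a * t) * exp (a*t)) by (rewrite Rmult_assoc, (Rmult_comm (exp _)), E2; ring).
    replace ((y s + b / a) * (exp (a * t) * exp (- a * s))) with ((y s + b / a) * exp (- a * s) * exp (a*t)) by ring.
    apply Rmult_le_compat_r; lra.
  - subst. replace (t - t) with 0 by ring. rewrite Rabs_R0, Rmult_0_r, exp_0. lra.
  - set (phi := fun x => (y x + b/a) * exp (a * x)).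
    set (phi' := fun x => y' x * exp (a * x) + (y x + b/a) * (a * exp (a * x))).
    destruct (MVT_cor2 phi phi' t s Hst) as [c [Hc1 Hc2]].
    { intros c Hc. unfold phi, phi'. apply (dpl_mult (fun x => y x + b/a) (fun x => exp (a*x))).
      eapply dpl_eq. apply dpl_plus. apply Hd. lra. apply dpl_const. ring. apply dpl_expk. }
    assert (Hpos : 0 <= phi' c).
    { unfold phi'. assert (Hb2 := Hbd c ltac:(lra)). apply Rabs_le_inv in Hb2.
      assert (He := exp_pos (a*c)).
      replace (y' c * exp (a * c) + (y c + b / a) * (a * exp (a * c))) with
        ((y' c + (a * y c + b)) * exp (a*c)) by (field; lra).
      assert (0 <= y' c + (a * y c + b)) by lra. nra. }
    assert (phi t <= phi s) by nra.
    unfold phi in H.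
    rewrite Rabs_left by lra.
    assert (E1 : exp (a * - (t - s)) = exp (a*s) * exp (-a * t)).
    { rewrite <- exp_plus. f_equal. ring. }
    assert (E2 : exp (a * t) * exp (-a * t) = 1).
    { rewrite <- exp_plus. replace (a*t + -a*t) with 0 by ring. apply exp_0. }
    rewrite E1. assert (Hp := exp_pos (-a*t)).
    replace (y t + b / a) with ((y t + b / a) * exp (a * t) * exp (-a*t)) by (rewrite Rmult_assoc, E2; ring).
    replace ((y s + b / a) * (exp (a * s) * exp (- a * t))) with ((y s + b / a) * exp (a * s) * exp (-a*t)) by ring.
    apply Rmult_le_compat_r; lra.
Qed.

Definition qf (g : mat) (v w : vec) : R := sum3 (fun i => sum3 (fun j => g i j * v i * w j)).

Lemma sym_e (g : mat) : sym3 g -> g 1%nat 0%nat = g 0%nat 1%nat /\ g 2%nat 0%nat = g 0%nat 2%nat /\ g 2%nat 1%nat = g 1%nat 2%nat.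
Proof. intros H. repeat split; apply H; lia. Qed.
Lemma asym_e (F : mat) : antisym3 F -> F 0%nat 0%nat = 0 /\ F 1%nat 1%nat = 0 /\ F 2%nat 2%nat = 0 /\
  F 1%nat 0%nat = - F 0%nat 1%nat /\ F 2%nat 0%nat = - F 0%nat 2%nat /\ F 2%nat 1%nat = - F 1%nat 2%nat.
Proof. intros H. pose proof (H 0%nat 0%nat ltac:(lia) ltac:(lia)). pose proof (H 1%nat 1%nat ltac:(lia) ltac:(lia)).
pose proof (H 2%nat 2%nat ltac:(lia) ltac:(lia)). repeat split; try lra; apply H; lia. Qed.
Lemma Casym_e (C : sconst) k : C_antisym C -> (k < 3)%nat -> antisym3 (C k).
Proof. intros H Hk i j Hi Hj. apply H; auto. Qed.

Ltac symrw g H := let a := fresh in let b := fresh in let c := fresh in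
  destruct (sym_e g H) as [a [b c]]; rewrite ?a, ?b, ?c in *; clear a b c.
Ltac asymrw F H := let a1 := fresh in let a2 := fresh in let a3 := fresh in
  let a4 := fresh in let a5 := fresh in let a6 := fresh in
  destruct (asym_e F H) as [a1 [a2 [a3 [a4 [a5 a6]]]]]; rewrite ?a1, ?a2, ?a3, ?a4, ?a5, ?a6 in *; clear a1 a2 a3 a4 a5 a6.
Ltac Crw C H := asymrw (C 0%nat) (Casym_e C 0%nat H ltac:(lia));
  asymrw (C 1%nat) (Casym_e C 1%nat H ltac:(lia)); asymrw (C 2%nat) (Casym_e C 2%nat H ltac:(lia)).

Definition cofm (g : mat) : mat := fun i j =>
  let a := g 0%nat 0%nat in let b := g 0%nat 1%nat in let c := g 0%nat 2%nat in
  let d := g 1%nat 1%nat in let e := g 1%nat 2%nat in let f := g 2%nat 2%nat in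
  match i, j with
  | O,O => d*f-e*e | O,S O => c*e-b*f | O, S (S O) => b*e-c*d | S O, O => c*e-b*f
  | S O, S O => a*f-c*c | S O, S (S O) => b*c-a*e
  | S (S O), O => b*e-c*d | S (S O), S O => b*c-a*e | S (S O), S (S O) => a*d-b*b | _,_ => 0 end.

Ltac fsolve H := field; try (let HH := fresh in intro HH; apply H; clear - HH; first [lra | nra]).

Lemma ginv_cof g i j : sym3 g -> det3 g <> 0 -> (i<3)%nat -> (j<3)%nat -> ginv g i j = cofm g i j / det3 g.
Proof. intros Hs Hd Hi Hj. unfold ginv. unfold det3 in *. unfold sum3, eps3 in *. cbv beta iota in *.
  destruct i as [|[|[|]]]; destruct j as [|[|[|]]]; try lia; unfold cofm, sum3, eps3; cbv beta iota; symrw g Hs; fsolve Hd.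
Qed.

Ltac expand_ginv := repeat (rewrite ginv_cof by (auto; lia)); unfold cofm, det3, sum3, eps3, kdelta; cbv beta iota zeta delta [Nat.eqb].

Lemma ginv_right g i j : sym3 g -> det3 g <> 0 -> (i<3)%nat -> (j<3)%nat ->
  sum3 (fun k => g i k * ginv g k j) = kdelta i j.
Proof. intros Hs Hd Hi Hj. unfold sum3.
 destruct i as [|[|[|]]]; destruct j as [|[|[|]]]; try lia; expand_ginv; unfold det3, sum3, eps3 in Hd; cbv beta iota in Hd; symrw g Hs; fsolve Hd. Qed.
Lemma ginv_left g i j : sym3 g -> det3 g <> 0 -> (i<3)%nat -> (j<3)%nat ->
  sum3 (fun k => ginv g i k * g k j) = kdelta i j.
Proof. intros Hs Hd Hi Hj. unfold sum3.
 destruct i as [|[|[|]]]; destruct j as [|[|[|]]]; try lia; expand_ginv; unfold det3, sum3, eps3 in Hd; cbv beta iota in Hd; symrw g Hs; fsolve Hd. Qed.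
Lemma ginv_sym g i j : sym3 g -> det3 g <> 0 -> (i<3)%nat -> (j<3)%nat -> ginv g i j = ginv g j i.
Proof. intros Hs Hd Hi Hj. rewrite !ginv_cof by auto.
  destruct i as [|[|[|]]]; destruct j as [|[|[|]]]; try lia; reflexivity. Qed.

Definition e3 (i : nat) : vec := fun k => if Nat.eqb k i then 1 else 0.

Lemma posdef_nonneg g v : posdef3 g -> 0 <= qf g v v.
Proof. intros H. destruct (Req_dec (v 0%nat) 0); destruct (Req_dec (v 1%nat) 0); destruct (Req_dec (v 2%nat) 0).
 1: (unfold qf, sum3; rewrite H0, H1, H2; lra).
 all: apply Rlt_le, H; tauto.
Qed.

Lemma posdef_minors g : sym3 g -> posdef3 g ->
  0 < g 0%nat 0%nat /\ 0 < g 0%nat 0%nat * g 1%nat 1%nat - g 0%nat 1%nat * g 0%nat 1%nat /\ 0 < det3 g.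
Proof.
  intros Hs Hp.
  assert (H1 : 0 < g 0%nat 0%nat).
  { pose proof (Hp (e3 0) ltac:(left; unfold e3; simpl; lra)). unfold sum3, e3 in H. simpl in H. lra. }
  set (m2 := g 0%nat 0%nat * g 1%nat 1%nat - g 0%nat 1%nat * g 0%nat 1%nat).
  assert (H2 : 0 < m2).
  { set (v := fun k => match k with O => g 0%nat 1%nat | S O => - g 0%nat 0%nat | _ => 0 end).
    pose proof (Hp v ltac:(right; left; unfold v; lra)). unfold sum3, v in H. cbv beta iota in H.
    symrw g Hs.
    assert (E : g 0%nat 0%nat * m2 = g 0%nat 0%nat * g 0%nat 1%nat * g 0%nat 1%nat + g 0%nat 1%nat * g 0%nat 1%nat * - g 0%nat 0%nat + g 0%nat 2%nat * g 0%nat 1%nat * 0 +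
     (g 0%nat 1%nat * - g 0%nat 0%nat * g 0%nat 1%nat + g 1%nat 1%nat * - g 0%nat 0%nat * - g 0%nat 0%nat + g 1%nat 2%nat * - g 0%nat 0%nat * 0) +
     (g 0%nat 2%nat * 0 * g 0%nat 1%nat + g 1%nat 2%nat * 0 * - g 0%nat 0%nat + g 2%nat 2%nat * 0 * 0)) by (unfold m2; ring).
    nra. }
  split; [auto | split; [auto|]].
  set (v := fun k => cofm g k 2%nat).
  assert (Hv2 : v 2%nat = m2) by (unfold v, cofm, m2; simpl; ring).
  pose proof (Hp v ltac:(right; right; lra)).
  assert (E : qf g v v = det3 g * m2).
  { unfold qf, v, det3, sum3, eps3, cofm, m2. cbv beta iota zeta. symrw g Hs. ring. }
  unfold qf in E. rewrite E in H. nra.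
Qed.

Lemma discr A B Cc : 0 <= A -> (forall s, 0 <= A * s * s - 2 * B * s + Cc) -> B * B <= A * Cc.
Proof.
  intros HA H. destruct (Req_dec A 0) as [H0|H0].
  - subst. destruct (Req_dec B 0) as [HB|HB]. subst. pose proof (H 0). lra.
    pose proof (H ((Cc + 1) / (2 * B))) as H1. replace (0 * ((Cc + 1) / (2 * B)) * ((Cc + 1) / (2 * B)) - 2 * B * ((Cc + 1) / (2 * B)) + Cc) with (-1) in H1 by (field; auto). lra.
  - pose proof (H (B / A)) as H1. assert (0 < A) by lra.
    replace (A * (B / A) * (B / A) - 2 * B * (B / A) + Cc) with (Cc - B * B / A) in H1 by (field; auto).
    apply Rmult_le_reg_r with (/ A). apply Rinv_0_lt_compat; auto.
    replace (B * B * / A) with (B * B / A) by (unfold Rdiv; ring).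
    replace (A * Cc * / A) with Cc by (field; auto). lra.
Qed.

Lemma qf_sym g v w : sym3 g -> qf g v w = qf g w v.
Proof. intros Hs. unfold qf, sum3. symrw g Hs. ring. Qed.

Lemma cs_g g v w : sym3 g -> posdef3 g -> qf g v w * qf g v w <= qf g v v * qf g w w.
Proof.
  intros Hs Hp. rewrite (Rmult_comm (qf g v v)).
  apply discr. apply posdef_nonneg; auto.
  intros s. pose proof (posdef_nonneg g (fun k => s * w k - v k) Hp).
  replace (qf g w w * s * s - 2 * qf g v w * s + qf g v v) with (qf g (fun k => s * w k - v k) (fun k => s * w k - v k)); auto.
  unfold qf, sum3. symrw g Hs. ring.
Qed.

Definition ss (x : nat -> nat -> R) := sum3 (fun i => sum3 (fun j => x i j)).
Lemma ss_sq x : 0 <= ss (fun i j => x i j * x i j).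
Proof. unfold ss, sum3. repeat apply Rplus_le_le_0_compat; apply Rle_0_sqr. Qed.
Lemma cs9 (x y : nat -> nat -> R) : ss (fun i j => x i j * y i j) * ss (fun i j => x i j * y i j) <=
  ss (fun i j => x i j * x i j) * ss (fun i j => y i j * y i j).
Proof.
  rewrite (Rmult_comm (ss (fun i j => x i j * x i j))).
  apply discr. apply ss_sq.
  intros s. replace (ss (fun i j => y i j * y i j) * s * s - 2 * ss (fun i j => x i j * y i j) * s + ss (fun i j => x i j * x i j))
   with (ss (fun i j => (s * y i j - x i j) * (s * y i j - x i j))) by (unfold ss, sum3; ring).
  apply ss_sq.
Qed.
Lemma sum3_ext f g : (forall k, (k<3)%nat -> f k = g k) -> sum3 f = sum3 g.
Proof. intros H. unfold sum3. rewrite !H by lia. reflexivity. Qed.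

Definition Lmat (l00 l10 l11 l20 l21 l22 : R) : mat := fun i j =>
  match i, j with
  | O, O => l00 | S O, O => l10 | S O, S O => l11 | S (S O), O => l20 | S (S O), S O => l21
  | S (S O), S (S O) => l22 | _, _ => 0 end.
Definition Minv (l00 l10 l11 l20 l21 l22 : R) : mat := fun i j =>
  match i, j with
  | O, O => 1 / l00 | S O, O => - l10 / (l00 * l11) | S O, S O => 1 / l11
  | S (S O), O => (l10 * l21 - l11 * l20) / (l00 * l11 * l22) | S (S O), S O => - l21 / (l11 * l22)
  | S (S O), S (S O) => 1 / l22 | _, _ => 0 end.

Definition cholP (P : mat) (l00 l10 l11 l20 l21 l22 : R) : Prop :=
  0 < l00 /\ 0 < l11 /\ 0 < l22 /\
  forall i j, (i < 3)%nat -> (j < 3)%nat -> P i j = sum3 (fun k => Lmat l00 l10 l11 l20 l21 l22 i k * Lmat l00 l10 l11 l20 l21 l22 j k).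

Lemma chol (P : mat) : sym3 P -> 0 < P 0%nat 0%nat -> 0 < P 0%nat 0%nat * P 1%nat 1%nat - P 0%nat 1%nat * P 0%nat 1%nat ->
  0 < det3 P -> exists l00 l10 l11 l20 l21 l22, cholP P l00 l10 l11 l20 l21 l22.
Proof.
  intros Hs Ha Hm Hd.
  set (a := P 0%nat 0%nat) in *. set (b := P 0%nat 1%nat) in *. set (c := P 0%nat 2%nat).
  set (d := P 1%nat 1%nat) in *. set (e := P 1%nat 2%nat). set (f := P 2%nat 2%nat).
  assert (Hdet : det3 P = a*(d*f-e*e) - b*(b*f-e*c) + c*(b*e-d*c)).
  { unfold det3, sum3, eps3. cbv beta iota. symrw P Hs. unfold a,b,c,d,e,f. ring. }
  set (r1 := sqrt a). assert (Hr1 : r1 * r1 = a) by (apply sqrt_sqrt; lra).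
  assert (Hr1p : 0 < r1) by (apply sqrt_lt_R0; lra).
  set (l10 := b / r1). set (l20 := c / r1).
  set (q := d - l10 * l10).
  assert (Hq : q = (a * d - b * b) / a). { unfold q, l10. replace (b / r1 * (b / r1)) with (b*b/(r1*r1)) by (field; lra). rewrite Hr1. field. lra. }
  assert (Hqp : 0 < q). { rewrite Hq. apply Rdiv_lt_0_compat; lra. }
  set (r2 := sqrt q). assert (Hr2 : r2 * r2 = q) by (apply sqrt_sqrt; lra).
  assert (Hr2p : 0 < r2) by (apply sqrt_lt_R0; lra).
  set (l21 := (e - l20 * l10) / r2).
  set (s := f - l20 * l20 - l21 * l21).
  assert (E20 : l20 * l20 = c * c / a). { unfold l20. rewrite <- Hr1. field. lra. }
  assert (E10 : l20 * l10 = c * b / a). { unfold l20, l10. rewrite <- Hr1. field. lra. }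
  assert (E11 : l10 * l10 = b * b / a). { unfold l10. rewrite <- Hr1. field. lra. }
  assert (E21 : l21 * l21 = (e - c * b / a) * (e - c * b / a) / q). { unfold l21. rewrite <- Hr2, E10. field. lra. }
  assert (Hs' : s = det3 P / (a * d - b * b)).
  { unfold s. rewrite E20, E21, Hq, Hdet. field. split; lra. }
  assert (Hsp : 0 < s). { rewrite Hs'. apply Rdiv_lt_0_compat; lra. }
  set (r3 := sqrt s). assert (Hr3 : r3 * r3 = s) by (apply sqrt_sqrt; lra).
  assert (Hr3p : 0 < r3) by (apply sqrt_lt_R0; lra).
  exists r1, l10, r2, l20, l21, r3. split; [auto|split;[auto|split;[auto|]]].
  intros i j Hi Hj.
  destruct i as [|[|[|]]]; destruct j as [|[|[|]]]; try lia; unfold sum3, Lmat; cbv beta iota;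
  try (symrw P Hs); fold a b c d e f.
  - lra.
  - unfold l10. field. lra.
  - unfold l20. field. lra.
  - unfold l10. field. lra.
  - rewrite Hr2. unfold q. ring.
  - replace (r2 * l21) with (e - l20 * l10) by (unfold l21; field; lra). ring.
  - unfold l20. field. lra.
  - replace (l21 * r2) with (e - l20 * l10) by (unfold l21; field; lra). ring.
  - rewrite Hr3. unfold s. ring.
Qed.

Lemma chol_det g l00 l10 l11 l20 l21 l22 : cholP g l00 l10 l11 l20 l21 l22 ->
  det3 g = (l00 * l11 * l22) * (l00 * l11 * l22).
Proof. intros [H0 [H1 [H2 HL]]]. unfold det3, sum3. rewrite !HL by lia. unfold eps3, sum3, Lmat. cbv beta iota. ring. Qed.

Lemma chol_ginv g l00 l10 l11 l20 l21 l22 : sym3 g -> cholP g l00 l10 l11 l20 l21 l22 ->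
  forall i j, (i<3)%nat -> (j<3)%nat ->
  ginv g i j = sum3 (fun k => Minv l00 l10 l11 l20 l21 l22 k i * Minv l00 l10 l11 l20 l21 l22 k j).
Proof. intros Hs Hc i j Hi Hj. pose proof (chol_det _ _ _ _ _ _ _ Hc) as Hd.
  destruct Hc as [H0 [H1 [H2 HL]]].
  assert (Hd0 : det3 g <> 0) by (rewrite Hd; apply Rgt_not_eq; apply Rmult_lt_0_compat; apply Rmult_lt_0_compat; try apply Rmult_lt_0_compat; lra).
  rewrite ginv_cof by auto. rewrite Hd. unfold cofm. rewrite !HL by lia.
  destruct i as [|[|[|]]]; destruct j as [|[|[|]]]; try lia; unfold sum3, Lmat, Minv; cbv beta iota; field; lra.
Qed.

Definition kk (g K : mat) : R := sum3 (fun i => sum3 (fun j => K i j * Kuu g K i j)).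

Lemma kcs g K v : sym3 g -> posdef3 g -> sym3 K ->
  0 <= kk g K /\ qf K v v * qf K v v <= kk g K * (qf g v v * qf g v v).
Proof.
  intros Hs Hp HK. destruct (posdef_minors g Hs Hp) as [Ha [Hm Hd]].
  destruct (chol g Hs Ha Hm Hd) as [l00 [l10 [l11 [l20 [l21 [l22 Hc]]]]]].
  pose proof (chol_ginv g _ _ _ _ _ _ Hs Hc) as HG.
  set (M := Minv l00 l10 l11 l20 l21 l22).
  set (L := Lmat l00 l10 l11 l20 l21 l22).
  set (Kh := fun a b => sum3 (fun i => sum3 (fun j => M a i * K i j * M b j))).
  set (yh := fun a => sum3 (fun i => L i a * v i)).
  assert (E1 : kk g K = ss (fun a b => Kh a b * Kh a b)).
  { unfold kk, Kuu, sum3. rewrite !HG by lia. unfold Kh, ss, sum3. fold M. symrw K HK. ring. }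
  destruct Hc as [H0 [H1 [H2 HL]]].
  assert (E2 : qf K v v = ss (fun a b => Kh a b * (yh a * yh b))).
  { unfold qf, Kh, yh, ss, sum3, M, L, Minv, Lmat. cbv beta iota. symrw K HK. field. lra. }
  assert (E3 : qf g v v * qf g v v = ss (fun a b => (yh a * yh b) * (yh a * yh b))).
  { unfold qf, sum3. rewrite !HL by lia. unfold yh, ss, sum3, L. ring. }
  split. rewrite E1. apply ss_sq.
  rewrite E1, E2, E3. apply cs9.
Qed.

Lemma abs_le_of_sq x y Q : 0 <= Q -> 0 <= y -> x * x <= Q * (y * y) -> Rabs x <= (Q + 1) * y.
Proof. intros HQ Hy H. assert (Hq : Q * (y*y) <= (Q+1)*y*((Q+1)*y)) by nra.
 apply Rabs_le. split.
 - destruct (Rle_dec (- ((Q + 1) * y)) x); auto. assert (0 <= (Q+1)*y) by nra.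
   pose proof (Rmult_le_0_lt_compat ((Q+1)*y) (-x) ((Q+1)*y) (-x) H0 H0 ltac:(lra) ltac:(lra)). nra.
 - destruct (Rle_dec x ((Q + 1) * y)); auto. assert (0 <= (Q+1)*y) by nra.
   pose proof (Rmult_le_0_lt_compat ((Q+1)*y) x ((Q+1)*y) x H0 H0 ltac:(lra) ltac:(lra)). nra. Qed.

Lemma aga_nonneg g a : sym3 g -> posdef3 g -> 0 <= sum3 (fun i => sum3 (fun j => a i * ginv g i j * a j)).
Proof.
  intros Hs Hp. destruct (posdef_minors g Hs Hp) as [Ha [Hm Hd]].
  destruct (chol g Hs Ha Hm Hd) as [l00 [l10 [l11 [l20 [l21 [l22 Hc]]]]]].
  pose proof (chol_ginv g _ _ _ _ _ _ Hs Hc) as HG.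
  set (M := Minv l00 l10 l11 l20 l21 l22).
  replace (sum3 (fun i => sum3 (fun j => a i * ginv g i j * a j))) with
    (sum3 (fun k => sum3 (fun i => M k i * a i) * sum3 (fun i => M k i * a i))).
  unfold sum3. repeat apply Rplus_le_le_0_compat; apply Rle_0_sqr.
  unfold sum3. rewrite !HG by lia. unfold sum3. fold M. ring.
Qed.

Definition sg1S (S : mat) : R := sum3 (fun i => S i i).
Definition trS2 (S : mat) : R := sum3 (fun i => sum3 (fun j => S i j * S j i)).
Definition conjm (H S : mat) : mat := fun a b => sum3 (fun i => sum3 (fun j => H a i * S i j * H j b)).

Lemma e1_sos S : sym3 S -> sg1S S * sg1S S - 2 * trS2 S <= 2 * sg1S S * S 0%nat 0%nat.
Proof. intros Hs. unfold sg1S, trS2, sum3. symrw S Hs.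
  set (a := S 0%nat 0%nat). set (b := S 1%nat 1%nat). set (c := S 2%nat 2%nat).
  set (x := S 0%nat 1%nat). set (y := S 0%nat 2%nat). set (z := S 1%nat 2%nat).
  assert (0 <= 3*a*a + (b-c)*(b-c) + 4*(x*x+y*y+z*z)) by (pose proof (Rle_0_sqr a); pose proof (Rle_0_sqr (b-c));
    pose proof (Rle_0_sqr x); pose proof (Rle_0_sqr y); pose proof (Rle_0_sqr z); unfold Rsqr in *; lra).
  match goal with |- ?L <= ?R => assert (R - L = 3*a*a + (b-c)*(b-c) + 4*(x*x+y*y+z*z)) by ring end. lra. Qed.

Lemma sim_inv (H S : mat) : (forall i j, (i<3)%nat -> (j<3)%nat -> sum3 (fun k => H i k * H k j) = kdelta i j) ->
  sg1S (conjm H S) = sg1S S /\ trS2 (conjm H S) = trS2 S.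
Proof.
  intros HH. set (hh := fun i j => sum3 (fun k => H i k * H k j)).
  assert (HH' : forall i j, (i<3)%nat -> (j<3)%nat -> hh i j = kdelta i j) by (intros; apply HH; auto).
  split.
  - assert (E : sg1S (conjm H S) = sum3 (fun i => sum3 (fun j => S i j * hh j i))) by (unfold sg1S, conjm, hh, sum3; ring).
    rewrite E. unfold sum3. rewrite !HH' by lia. unfold kdelta, sg1S, sum3. simpl. ring.
  - assert (E : trS2 (conjm H S) = sum3 (fun i => sum3 (fun j => sum3 (fun k => sum3 (fun l =>
        S i j * hh j k * S k l * hh l i))))) by (unfold trS2, conjm, hh, sum3; ring).
    rewrite E. unfold sum3. rewrite !HH' by lia. unfold kdelta, trS2, sum3. simpl. ring.
Qed.

Definition vv (y : vec) : R := sum3 (fun i => y i * y i).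

Lemma sq3_zero a b c : a*a + b*b + c*c = 0 -> a = 0 /\ b = 0 /\ c = 0.
Proof. intros H. pose proof (Rle_0_sqr a). pose proof (Rle_0_sqr b). pose proof (Rle_0_sqr c). unfold Rsqr in *.
  assert (a*a = 0) by lra. assert (b*b = 0) by lra. assert (c*c=0) by lra.
  repeat split; apply Rsqr_0_uniq; unfold Rsqr; auto. Qed.
Lemma vv_nonneg y : 0 <= vv y.
Proof. unfold vv, sum3. repeat apply Rplus_le_le_0_compat; apply Rle_0_sqr. Qed.

Lemma key_S S y : sym3 S ->
  (sg1S S * sg1S S - 2 * trS2 S) * vv y <= 2 * sg1S S * qf S y y.
Proof.
  intros Hs.
  assert (Hyy : 0 <= vv y) by apply vv_nonneg.
  set (r := sqrt (vv y)).
  assert (Hr : r * r = vv y) by (apply sqrt_sqrt; auto).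
  assert (Hr0 : 0 <= r) by apply sqrt_pos.
  set (v := fun i => match i with O => y 0%nat - r | _ => y i end).
  set (c := vv v / 2).
  destruct (Req_dec c 0) as [Hc|Hc].
  -
    assert (Hv : vv v = 0) by (unfold c in Hc; lra).
    unfold vv, v, sum3 in Hv.
    destruct (sq3_zero _ _ _ Hv) as [Hy0 [Hy1 Hy2]]. cbv beta iota in Hy0, Hy1, Hy2.
    assert (Hy0' : y 0%nat = r) by lra. clear Hy0. rename Hy0' into Hy0.
    assert (E1 : vv y = r * r) by auto.
    assert (E2 : qf S y y = r * r * S 0%nat 0%nat).
    { unfold qf, sum3. rewrite Hy1, Hy2, Hy0. ring. }
    rewrite E1, E2. pose proof (e1_sos S Hs). assert (0 <= r * r) by nra.
    replace (2 * sg1S S * (r * r * S 0%nat 0%nat)) with ((2 * sg1S S * S 0%nat 0%nat) * (r * r)) by ring.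
    apply Rmult_le_compat_r; auto.
  - set (H := fun i j => kdelta i j - v i * v j / c).
    assert (Hsym : sym3 H) by (intros i j Hi Hj; unfold H, kdelta; rewrite Nat.eqb_sym; field; auto).
    assert (HH : forall i j, (i<3)%nat -> (j<3)%nat -> sum3 (fun k => H i k * H k j) = kdelta i j).
    { intros i j Hi Hj.
      assert (Hc' : v 0%nat * v 0%nat + v 1%nat * v 1%nat + v 2%nat * v 2%nat <> 0) by (intro Z; apply Hc; unfold c, vv, sum3; rewrite Z; field).
      unfold H, c, vv, sum3.
      destruct i as [|[|[|]]]; destruct j as [|[|[|]]]; try lia; unfold kdelta; cbv beta iota delta [Nat.eqb];
      field; intro Z; apply Hc'; nra. }
    assert (Hvy : sum3 (fun i => v i * y i) = c).
    { unfold c, vv, v, sum3. cbv beta iota. unfold vv, sum3 in Hr. nra. }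
    assert (HHy : forall i, (i<3)%nat -> sum3 (fun k => H i k * y k) = r * kdelta i 0).
    { intros i Hi. unfold H. 
      replace (sum3 (fun k => (kdelta i k - v i * v k / c) * y k)) with
        (sum3 (fun k => kdelta i k * y k) - v i * sum3 (fun k => v k * y k) / c) by (unfold sum3; field; auto).
      rewrite Hvy. unfold sum3, kdelta, v. destruct i as [|[|[|]]]; try lia; simpl; field; auto. }
    assert (Hyr : forall i, (i<3)%nat -> y i = r * H i 0%nat).
    { intros i Hi. transitivity (sum3 (fun k => kdelta i k * y k)).
      { unfold sum3, kdelta. destruct i as [|[|[|]]]; try lia; simpl; ring. }
      transitivity (sum3 (fun k => sum3 (fun j => H i j * H j k) * y k)).
      { apply sum3_ext. intros k Hk. rewrite HH by lia. reflexivity. }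
      transitivity (sum3 (fun j => H i j * sum3 (fun k => H j k * y k))).
      { unfold sum3. ring. }
      transitivity (sum3 (fun j => H i j * (r * kdelta j 0))).
      { apply sum3_ext. intros k Hk. rewrite HHy by lia. reflexivity. }
      unfold sum3, kdelta; simpl; ring. }
    destruct (sim_inv H S HH) as [E1 E2].
    assert (Hs' : sym3 (conjm H S)).
    { intros a b Ha Hb. unfold conjm, sum3. symrw S Hs. rewrite (Hsym a 0%nat), (Hsym a 1%nat), (Hsym a 2%nat),
        (Hsym 0%nat b), (Hsym 1%nat b), (Hsym 2%nat b) by lia. ring. }
    pose proof (e1_sos _ Hs') as Hk. rewrite E1, E2 in Hk.
    assert (Eq : qf S y y = r * r * conjm H S 0%nat 0%nat).
    { unfold qf, sum3. rewrite !(Hyr _) by lia. unfold conjm, sum3.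
      rewrite (Hsym 1%nat 0%nat), (Hsym 2%nat 0%nat) by lia. symrw S Hs. ring. }
    rewrite Eq, <- Hr. assert (0 <= r * r) by nra.
    replace (2 * sg1S S * (r * r * conjm H S 0%nat 0%nat)) with ((2 * sg1S S * conjm H S 0%nat 0%nat) * (r * r)) by ring.
    apply Rmult_le_compat_r; auto.
Qed.

Definition Mm (C:sconst) (l k:nat) : R := (1/2) * sum3 (fun i => sum3 (fun j => eps3 l i j * C k i j)).
Definition nS (C:sconst) (l k:nat) : R := (Mm C l k + Mm C k l)/2.
Definition aV (C:sconst) (i:nat) : R := (1/2) * sum3 (fun k => C k i k).
Definition NN (C:sconst) (g:mat) (i j:nat) : R := sum3 (fun k => nS C i k * g k j).
Definition sg1 C g := sum3 (fun i => NN C g i i).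
Definition trN2 C g := sum3 (fun i => sum3 (fun j => NN C g i j * NN C g j i)).
Definition Rform (C:sconst) (g:mat) : R :=
  - (2*trN2 C g - sg1 C g ^2)/2 - 6 * det3 g * sum3 (fun i => sum3 (fun j => aV C i * ginv g i j * aV C j)).

Definition mkg (a b c d e f : R) : mat := fun i j =>
  match i, j with
  | O,O => a | O,S O => b | O, S (S O) => c | S O, O => b | S O, S O => d | S O, S (S O) => e
  | S (S O), O => c | S (S O), S O => e | S (S O), S (S O) => f | _,_ => 0 end.
Definition mkC (x : nat -> R) : sconst := fun k i j =>
  match i, j with
  | O, S O => x (3*k)%nat | S O, O => - x (3*k)%nat
  | O, S (S O) => x (3*k+1)%nat | S (S O), O => - x (3*k+1)%nat
  | S O, S (S O) => x (3*k+2)%nat | S (S O), S O => - x (3*k+2)%nat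
  | _,_ => 0 end.
Definition Dg a b c d e f := a*(d*f-e*e) - b*(b*f-e*c) + c*(b*e-d*c).
Lemma det_mkg a b c d e f : det3 (mkg a b c d e f) = Dg a b c d e f.
Proof. unfold det3, sum3, eps3, mkg, Dg. ring. Qed.
Lemma ginv_mkg a b c d e f i j : Dg a b c d e f <> 0 -> (i<3)%nat -> (j<3)%nat ->
  ginv (mkg a b c d e f) i j = mkg (d*f-e*e) (c*e-b*f) (b*e-c*d) (a*f-c*c) (b*c-a*e) (a*d-b*b) i j / Dg a b c d e f.
Proof. intros Hd Hi Hj. unfold ginv. rewrite det_mkg.
destruct i as [|[|[|]]]; destruct j as [|[|[|]]]; try lia; unfold sum3, eps3, mkg; cbv beta iota; field; exact Hd.
Qed.

Lemma R_formula0 (x : nat -> R) a b c d e f :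
  Dg a b c d e f <> 0 -> Rsc (mkC x) (mkg a b c d e f) * det3 (mkg a b c d e f) = Rform (mkC x) (mkg a b c d e f).
Proof.
intros Hd.
unfold Rform, Rsc, Ric, gam, trN2, sg1, NN, nS, Mm, aV, sum3.
rewrite !ginv_mkg by (auto; lia). rewrite det_mkg.
unfold eps3, mkC, mkg. cbv beta iota. cbn [Nat.mul Nat.add].
unfold Dg in *. field. exact Hd.
Qed.

Definition ext2 (g g' : mat) := forall i j, (i<3)%nat -> (j<3)%nat -> g i j = g' i j.
Definition ext3 (C C' : sconst) := forall k i j, (k<3)%nat -> (i<3)%nat -> (j<3)%nat -> C k i j = C' k i j.
Ltac sx := repeat (apply sum3_ext; intros ? ?).

Lemma det3_ext g g' : ext2 g g' -> det3 g = det3 g'.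
Proof. intros H. unfold det3. sx. rewrite !H by lia. reflexivity. Qed.
Lemma ginv_ext g g' : ext2 g g' -> ext2 (ginv g) (ginv g').
Proof. intros H i j Hi Hj. unfold ginv. rewrite (det3_ext g g' H). f_equal. sx. rewrite !H by lia. reflexivity. Qed.
Lemma gam_ext C C' g g' l i j : ext3 C C' -> ext2 g g' -> (l<3)%nat -> (i<3)%nat -> (j<3)%nat -> gam C g l i j = gam C' g' l i j.
Proof. intros HC H Hl Hi Hj. pose proof (ginv_ext g g' H) as HG. unfold gam, sum3.
  rewrite !HG, !HC, !H by lia. reflexivity. Qed.
Lemma Rsc_ext C C' g g' : ext3 C C' -> ext2 g g' -> Rsc C g = Rsc C' g'.
Proof. intros HC H. pose proof (ginv_ext g g' H) as HG. unfold Rsc, Ric, sum3.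
  rewrite !HG by lia. rewrite !(gam_ext C C' g g') by (auto; lia). rewrite !HC by lia. reflexivity. Qed.
Lemma Rform_ext C C' g g' : ext3 C C' -> ext2 g g' -> Rform C g = Rform C' g'.
Proof. intros HC H. pose proof (ginv_ext g g' H) as HG. unfold Rform, trN2, sg1, NN, nS, Mm, aV, sum3.
  rewrite (det3_ext g g' H). rewrite !HG, !HC, !H by lia. reflexivity. Qed.

Lemma R_formula (C:sconst) (g:mat) :
  C_antisym C -> sym3 g -> det3 g <> 0 -> Rsc C g * det3 g = Rform C g.
Proof.
  intros HC Hs Hd.
  set (x := fun n => match n with
     | 0%nat => C 0%nat 0%nat 1%nat | 1%nat => C 0%nat 0%nat 2%nat | 2%nat => C 0%nat 1%nat 2%nat
     | 3%nat => C 1%nat 0%nat 1%nat | 4%nat => C 1%nat 0%nat 2%nat | 5%nat => C 1%nat 1%nat 2%nat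
     | 6%nat => C 2%nat 0%nat 1%nat | 7%nat => C 2%nat 0%nat 2%nat | _ => C 2%nat 1%nat 2%nat end).
  set (g' := mkg (g 0%nat 0%nat) (g 0%nat 1%nat) (g 0%nat 2%nat) (g 1%nat 1%nat) (g 1%nat 2%nat) (g 2%nat 2%nat)).
  assert (Eg : ext2 g g').
  { intros i j Hi Hj. unfold g', mkg. destruct i as [|[|[|]]]; destruct j as [|[|[|]]]; try lia; auto; apply Hs; lia. }
  assert (EC : ext3 C (mkC x)).
  { intros k i j Hk Hi Hj. destruct (asym_e (C k) (Casym_e C k HC Hk)) as [a1 [a2 [a3 [a4 [a5 a6]]]]].
    unfold mkC, x. destruct k as [|[|[|]]]; destruct i as [|[|[|]]]; destruct j as [|[|[|]]]; try lia; cbn [Nat.mul Nat.add]; auto. }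
  rewrite (Rsc_ext C (mkC x) g g' EC Eg), (Rform_ext C (mkC x) g g' EC Eg), (det3_ext g g' Eg).
  apply R_formula0. rewrite <- det_mkg. fold g'. rewrite <- (det3_ext g g' Eg). auto.
Qed.

Lemma jac_na C : C_antisym C -> C_jacobi C -> forall l, (l<3)%nat -> sum3 (fun m => nS C l m * aV C m) = 0.
Proof.
  intros HC HJ l Hl. pose proof (HJ 0%nat 1%nat 2%nat l ltac:(lia) ltac:(lia) ltac:(lia) Hl) as J.
  assert (E : sum3 (fun m => nS C l m * aV C m) = / 2 * sum3 (fun m => C m 0%nat 1%nat * C l m 2%nat + C m 1%nat 2%nat * C l m 0%nat + C m 2%nat 0%nat * C l m 1%nat)).
  { destruct l as [|[|[|]]]; try lia; unfold nS, Mm, aV, sum3, eps3; cbv beta iota; Crw C HC; field. }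
  rewrite E, J. ring.
Qed.

Lemma C_dec C : C_antisym C -> forall k i j, (k<3)%nat -> (i<3)%nat -> (j<3)%nat ->
  C k i j = sum3 (fun l => eps3 i j l * nS C l k) + kdelta k j * aV C i - kdelta k i * aV C j.
Proof.
  intros HC k i j Hk Hi Hj.
  destruct k as [|[|[|]]]; destruct i as [|[|[|]]]; destruct j as [|[|[|]]]; try lia;
  unfold nS, Mm, aV, sum3, eps3, kdelta; cbv beta iota delta [Nat.eqb]; Crw C HC; field.
Qed.

Lemma nS_sym C : sym3 (nS C).
Proof. intros i j _ _. unfold nS. field. Qed.

Lemma IX_of_chol C s l00 l10 l11 l20 l21 l22 : C_antisym C -> (s = 1 \/ s = -1) ->
  (forall i, (i<3)%nat -> aV C i = 0) ->
  cholP (fun i j => s * nS C i j) l00 l10 l11 l20 l21 l22 -> bianchi_IX C.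
Proof.
  intros HC Hs Ha [H0 [H1 [H2 HL]]].
  set (dL := l00 * l11 * l22).
  assert (HdL : 0 < dL) by (unfold dL; apply Rmult_lt_0_compat; try apply Rmult_lt_0_compat; lra).
  assert (Hn : forall i j, (i<3)%nat -> (j<3)%nat -> nS C i j = s * sum3 (fun k => Lmat l00 l10 l11 l20 l21 l22 i k * Lmat l00 l10 l11 l20 l21 l22 j k)).
  { intros i j Hi Hj. rewrite <- (HL i j Hi Hj). destruct Hs; subst; ring. }
  exists (fun i j => Lmat l00 l10 l11 l20 l21 l22 i j / (s * dL)).
  exists (fun i j => s * dL * Minv l00 l10 l11 l20 l21 l22 i j).
  split.
  - intros i j Hi Hj. unfold dL.
    destruct i as [|[|[|]]]; destruct j as [|[|[|]]]; try lia;
    unfold sum3, Lmat, Minv, kdelta; cbv beta iota delta [Nat.eqb];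
    destruct Hs; subst; field; repeat split; lra.
  - intros a b c Ha' Hb Hc.
    unfold sum3. rewrite !(C_dec C HC) by lia. rewrite !Ha by lia.
    unfold sum3. rewrite !Hn by lia. unfold dL.
    destruct a as [|[|[|]]]; destruct b as [|[|[|]]]; destruct c as [|[|[|]]]; try lia;
    unfold sum3, Lmat, Minv, kdelta, eps3; cbv beta iota delta [Nat.eqb];
    destruct Hs; subst; field; repeat split; lra.
Qed.

Definition nz (x : vec) : Prop := x 0%nat <> 0 \/ x 1%nat <> 0 \/ x 2%nat <> 0.

Lemma key_n C g x : C_antisym C -> sym3 g -> posdef3 g ->
  exists y, (sg1 C g * sg1 C g - 2 * trN2 C g) * vv y <= 2 * sg1 C g * qf (nS C) x x /\ (nz x -> 0 < vv y).
Proof.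
  intros HC Hs Hp. destruct (posdef_minors g Hs Hp) as [Ha [Hm Hd]].
  destruct (chol g Hs Ha Hm Hd) as [l00 [l10 [l11 [l20 [l21 [l22 Hc]]]]]].
  destruct Hc as [H0 [H1 [H2 HL]]].
  set (L := Lmat l00 l10 l11 l20 l21 l22). set (M := Minv l00 l10 l11 l20 l21 l22).
  set (Sm := fun a b => sum3 (fun i => sum3 (fun j => L i a * nS C i j * L j b))).
  assert (HS : sym3 Sm).
  { intros a b _ _. unfold Sm, sum3. cbv beta. symrw (nS C) (nS_sym C). ring. }
  assert (E1 : sg1S Sm = sg1 C g).
  { unfold sg1, NN, sum3. rewrite !HL by lia. unfold sg1S, Sm, sum3, L. ring. }
  assert (E2 : trS2 Sm = trN2 C g).
  { unfold trN2, NN, sum3. rewrite !HL by lia. unfold trS2, Sm, sum3, L. ring. }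
  set (y := fun a => sum3 (fun i => M a i * x i)).
  assert (E3 : qf Sm y y = qf (nS C) x x).
  { unfold qf, Sm, y, sum3, L, M, Lmat, Minv. cbv beta iota. field. lra. }
  assert (Ex : forall i, (i<3)%nat -> x i = sum3 (fun a => L i a * y a)).
  { intros i Hi. unfold y, sum3, L, M, Lmat, Minv. destruct i as [|[|[|]]]; try lia; cbv beta iota; field; lra. }
  exists y. split.
  - rewrite <- E1, <- E2, <- E3. apply key_S; auto.
  - intros Hx. destruct (Rle_lt_or_eq_dec 0 (vv y) (vv_nonneg y)) as [Hlt|Heq]; auto.
    exfalso. unfold vv, sum3 in Heq. symmetry in Heq. destruct (sq3_zero _ _ _ Heq) as [Y0 [Y1 Y2]].
    unfold nz in Hx. rewrite (Ex 0%nat), (Ex 1%nat), (Ex 2%nat) in Hx by lia. unfold sum3 in Hx. rewrite Y0, Y1, Y2 in Hx.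
    unfold nz in Hx. lra.
Qed.

Theorem R_nonpos C g : bianchi_I_VIII C -> sym3 g -> posdef3 g -> Rsc C g <= 0.
Proof.
  intros [HC [HJ HnIX]] Hs Hp. apply Rnot_lt_le. intro HR.
  destruct (posdef_minors g Hs Hp) as [_ [_ Hd]].
  pose proof (R_formula C g HC Hs ltac:(lra)) as RF.
  pose proof (aga_nonneg g (aV C) Hs Hp) as HA.
  set (A := sum3 (fun i => sum3 (fun j => aV C i * ginv g i j * aV C j))) in *.
  set (s1 := sg1 C g) in *. set (t2 := trN2 C g) in *.
  assert (RF' : Rform C g = (s1 * s1 - 2 * t2) / 2 - 6 * det3 g * A) by (unfold Rform; fold s1 t2 A; field).
  assert (HD : 0 < s1 * s1 - 2 * t2).
  { assert (0 < Rsc C g * det3 g) by (apply Rmult_lt_0_compat; auto). assert (0 <= det3 g * A) by (apply Rmult_le_pos; lra). lra. }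
  assert (Hpos : forall x, nz x -> 0 < s1 * qf (nS C) x x).
  { intros x Hx. destruct (key_n C g x HC Hs Hp) as [y [Hy1 Hy2]]. specialize (Hy2 Hx).
    fold s1 t2 in Hy1. assert (0 < (s1 * s1 - 2 * t2) * vv y) by (apply Rmult_lt_0_compat; auto). lra. }
  assert (Hs1 : s1 <> 0).
  { intro Z. pose proof (Hpos (e3 0%nat) ltac:(left; unfold e3; simpl; lra)). rewrite Z in H. lra. }
  set (sg := if Rlt_dec 0 s1 then 1 else -1).
  assert (Hsg : sg = 1 \/ sg = -1) by (unfold sg; destruct (Rlt_dec 0 s1); auto).
  assert (Hsgp : forall q, 0 < s1 * q -> 0 < sg * q).
  { intros q Hq. unfold sg. destruct (Rlt_dec 0 s1).
    - assert (0 < q). { destruct (Rlt_dec 0 q); auto. nra. } lra.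
    - assert (s1 < 0) by lra. assert (q < 0). { destruct (Rlt_dec q 0); auto. nra. } lra. }
  set (n' := fun i j => sg * nS C i j).
  assert (Hqn : forall v, sum3 (fun i => sum3 (fun j => n' i j * v i * v j)) = sg * qf (nS C) v v).
  { intros v. unfold n', qf, sum3. ring. }
  assert (Hpn : posdef3 n').
  { intros v Hv. rewrite Hqn. apply Hsgp, Hpos. exact Hv. }
  assert (Hsn : sym3 n').
  { intros i j Hi Hj. unfold n'. rewrite (nS_sym C i j Hi Hj). reflexivity. }
  assert (Ha0 : forall i, (i<3)%nat -> aV C i = 0).
  { assert (Hnz : ~ nz (aV C)).
    { intro Hz. pose proof (Hpn (aV C) Hz) as P. rewrite Hqn in P.
      assert (qf (nS C) (aV C) (aV C) = sum3 (fun l => aV C l * sum3 (fun m => nS C l m * aV C m))) by (unfold qf, sum3; ring).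
      rewrite H in P. unfold sum3 at 1 in P. rewrite !(jac_na C HC HJ) in P by lia. lra. }
    intros i Hi. destruct (Req_dec (aV C i) 0); auto. exfalso. apply Hnz.
    destruct i as [|[|[|]]]; try lia; unfold nz; auto. }
  destruct (posdef_minors n' Hsn Hpn) as [Ha [Hm Hd']].
  destruct (chol n' Hsn Ha Hm Hd') as [l00 [l10 [l11 [l20 [l21 [l22 Hc]]]]]].
  apply HnIX. apply (IX_of_chol C sg l00 l10 l11 l20 l21 l22 HC Hsg Ha0 Hc).
Qed.

Ltac prep_g g Hs Hd := unfold det3, sum3, eps3 in Hd; cbv beta iota in Hd; symrw g Hs.

(* derivative of det *)
Lemma det_ident g K : sym3 g -> sym3 K -> det3 g <> 0 ->
  sum3 (fun i => sum3 (fun j => sum3 (fun k => eps3 i j k *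
     (K 0%nat i * g 1%nat j * g 2%nat k + g 0%nat i * K 1%nat j * g 2%nat k + g 0%nat i * g 1%nat j * K 2%nat k))))
  = Hmc g K * det3 g.
Proof. intros Hs HK Hd. unfold Hmc, sum3. expand_ginv. prep_g g Hs Hd. symrw K HK. fsolve Hd. Qed.

Lemma L1_ident g K u : sym3 g -> det3 g <> 0 ->
  sum3 (fun i => sum3 (fun j => g i j * u i * sum3 (fun m => Kud g K j m * u m))) = qf K u u.
Proof. intros Hs Hd. unfold Kud, qf, sum3. expand_ginv. prep_g g Hs Hd. fsolve Hd. Qed.

Lemma L2_ident C g u : C_antisym C -> sym3 g -> det3 g <> 0 ->
  sum3 (fun i => sum3 (fun j => g i j * u i * sum3 (fun k => sum3 (fun l => gam C g j k l * u k * u l)))) = 0.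
Proof. intros HC Hs Hd. unfold gam, sum3. expand_ginv. prep_g g Hs Hd. Crw C HC. fsolve Hd. Qed.

Lemma L3_ident g F u : antisym3 F -> sym3 g -> det3 g <> 0 ->
  sum3 (fun i => sum3 (fun j => g i j * u i * sum3 (fun l => sum3 (fun m => ginv g j l * F m l * u m)))) = 0.
Proof. intros HF Hs Hd. unfold sum3. expand_ginv. prep_g g Hs Hd. asymrw F HF. fsolve Hd. Qed.

Definition fvec (F : mat) : vec := fun i => match i with O => F 1%nat 2%nat | S O => F 2%nat 0%nat | _ => F 0%nat 1%nat end.

Lemma tau00_ident g E F : sym3 g -> antisym3 F -> det3 g <> 0 ->
  tau00 g E F = 1/2 * qf g E E + 1/2 * qf g (fvec F) (fvec F) / det3 g.
Proof. intros Hs HF Hd. unfold tau00, qf, fvec, sum3. expand_ginv. prep_g g Hs Hd. asymrw F HF. fsolve Hd. Qed.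

Lemma vec_recover g v k : sym3 g -> det3 g <> 0 -> (k<3)%nat ->
  v k = sum3 (fun i => ginv g k i * sum3 (fun j => g i j * v j)).
Proof. intros Hs Hd Hk. unfold sum3. destruct k as [|[|[|]]]; try lia; expand_ginv; prep_g g Hs Hd; fsolve Hd. Qed.

Lemma w_ident C g K E u rho e : u0 g u <> 0 -> rho <> 0 -> CE C E = - e * u0 g u ->
  (rhs_e C g K E u rho e * rho - rhs_rho C g K E u rho * e) / rho ^ 2 = 3 / (4 * u0 g u) * (e / rho).
Proof. intros HU Hr HCE. unfold rhs_e, rhs_rho. rewrite HCE. set (U := u0 g u) in *. unfold sum3. field. auto. Qed.

Definition rcoef C g K E u rho e : R :=
  - (3 / (4 * u0 g u) + sum3 (fun i => sum3 (fun j => K i j * u i * u j)) / (u0 g u)^2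
     - Hmc g K + sum3 (fun j => trC C j * u j) / u0 g u) + 3/4 * (e / rho) * qf g u E / (u0 g u)^2.

Lemma rho_ident C g K E u rho e : u0 g u <> 0 -> rho <> 0 -> CE C E = - e * u0 g u ->
  rhs_rho C g K E u rho = rcoef C g K E u rho e * rho.
Proof. intros HU Hr HCE. unfold rhs_rho, rcoef, qf. rewrite HCE. set (U := u0 g u) in *. unfold sum3. field. auto. Qed.

Lemma V_ident C g K F E u rho e : C_antisym C -> sym3 g -> antisym3 F -> det3 g <> 0 ->
  u0 g u <> 0 -> rho <> 0 -> CE C E = - e * u0 g u ->
  sum3 (fun i => sum3 (fun j => g i j * u i * rhs_u C g K F E u rho j)) = 2 * qf K u u - 3/4 * (e / rho) * qf g u E.
Proof.
  intros HC Hs HF Hd HU Hr HCE. unfold rhs_u. rewrite HCE. set (U := u0 g u) in *.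
  transitivity (2 * sum3 (fun i => sum3 (fun j => g i j * u i * sum3 (fun m => Kud g K j m * u m)))
     - sum3 (fun i => sum3 (fun j => g i j * u i * sum3 (fun k => sum3 (fun l => gam C g j k l * u k * u l)))) / U
     + 3 / (4 * rho * U) * (- e * U) * qf g u E
     - 3 / (4 * rho * U ^ 2) * (- e * U) * sum3 (fun i => sum3 (fun j => g i j * u i * sum3 (fun l => sum3 (fun m => ginv g j l * F m l * u m))))).
  { unfold qf, sum3. field. auto. }
  rewrite L1_ident, L2_ident, L3_ident by auto. field. auto.
Qed.

Lemma bo_ext f g T : (forall t, 0 <= t < T -> f t = g t) -> bounded_on g T -> bounded_on f T.
Proof. intros H [M HM]. exists M. intros t Ht. rewrite H by auto. auto. Qed.
Lemma bo_const c T : bounded_on (fun _ => c) T.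
Proof. exists (Rabs c). intros; lra. Qed.
Lemma bo_plus f g T : bounded_on f T -> bounded_on g T -> bounded_on (fun t => f t + g t) T.
Proof. intros [M1 H1] [M2 H2]. exists (M1 + M2). intros t Ht.
  eapply Rle_trans. apply Rabs_triang. specialize (H1 t Ht). specialize (H2 t Ht). lra. Qed.
Lemma bo_opp f T : bounded_on f T -> bounded_on (fun t => - f t) T.
Proof. intros [M1 H1]. exists M1. intros t Ht. rewrite Rabs_Ropp. auto. Qed.
Lemma bo_minus f g T : bounded_on f T -> bounded_on g T -> bounded_on (fun t => f t - g t) T.
Proof. intros H1 H2. apply (bo_plus f (fun t => - g t)); auto. apply bo_opp; auto. Qed.
Lemma bo_mult f g T : bounded_on f T -> bounded_on g T -> bounded_on (fun t => f t * g t) T.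
Proof. intros [M1 H1] [M2 H2]. exists (M1 * M2). intros t Ht. rewrite Rabs_mult.
  specialize (H1 t Ht). specialize (H2 t Ht). apply Rmult_le_compat; auto; apply Rabs_pos. Qed.
Lemma bo_div f g T : bounded_on f T -> bounded_on (fun t => / g t) T -> bounded_on (fun t => f t / g t) T.
Proof. intros H1 H2. apply (bo_mult f (fun t => / g t)); auto. Qed.
Lemma bo_pow f n T : bounded_on f T -> bounded_on (fun t => f t ^ n) T.
Proof. intros H. induction n. simpl. apply bo_const. simpl. apply (bo_mult f (fun t => f t ^ n)); auto. Qed.
Lemma bo_inv f T c : 0 < c -> (forall t, 0 <= t < T -> c <= f t) -> bounded_on (fun t => / f t) T.
Proof. intros Hc H. exists (/ c). intros t Ht. specialize (H t Ht).
  rewrite Rabs_right. apply Rinv_le_contravar; lra. apply Rle_ge, Rlt_le, Rinv_0_lt_compat. lra. Qed.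
Lemma bo_le f T B : (forall t, 0 <= t < T -> 0 <= f t <= B) -> bounded_on f T.
Proof. intros H. exists B. intros t Ht. specialize (H t Ht). rewrite Rabs_right; lra. Qed.
Lemma bo_abs f T B : (forall t, 0 <= t < T -> Rabs (f t) <= B) -> bounded_on f T.
Proof. intros H. exists B. auto. Qed.

Lemma sq_bound x c : x * x <= c -> Rabs x <= c + 1.
Proof. intros H. apply Rabs_le. split; destruct (Rle_dec 0 x); nra. Qed.

Lemma gron_up (y y' : R -> R) (a b T : R) : 0 < T -> 0 < a -> 0 <= b ->
  (forall t, 0 < t < T -> derivable_pt_lim y t (y' t)) ->
  (forall t, 0 < t < T -> Rabs (y' t) <= a * y t + b) ->
  exists B, forall t, 0 <= t < T -> y t <= B.
Proof.
  intros HT Ha Hb Hd Hbd.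
  assert (Hs : 0 < T/2 < T) by lra.
  exists (Rmax (y 0) ((y (T/2) + b/a) * exp (a * T))). intros t Ht.
  destruct (Req_dec t 0) as [->|Ht0]. apply Rmax_l.
  eapply Rle_trans; [|apply Rmax_r].
  pose proof (gron y y' a b T Ha Hb Hd Hbd (T/2) t Hs ltac:(lra)) as G.
  assert (Hba : 0 <= b / a) by (unfold Rdiv; apply Rmult_le_pos; [lra| apply Rlt_le, Rinv_0_lt_compat; lra]).
  assert (Hpos : 0 <= y (T/2) + b/a).
  { pose proof (Hbd (T/2) Hs). pose proof (Rabs_pos (y' (T/2))). 
    assert (0 <= a * y (T/2) + b) by lra.
    assert (a * (y (T/2) + b/a) = a * y (T/2) + b) by (field; lra). nra. }
  assert (exp (a * Rabs (t - T/2)) <= exp (a * T)).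
  { destruct (Req_dec (a * Rabs (t - T/2)) (a * T)) as [E|E]. rewrite E; lra.
    apply Rlt_le, exp_increasing. apply Rmult_lt_compat_l; auto. apply Rabs_def1; lra. }
  assert ((y (T / 2) + b / a) * exp (a * Rabs (t - T / 2)) <= (y (T / 2) + b / a) * exp (a * T)) by
    (apply Rmult_le_compat_l; auto). lra.
Qed.

Lemma gron_low (y y' : R -> R) (a T : R) : 0 < T -> 0 < a ->
  (forall t, 0 <= t < T -> 0 < y t) ->
  (forall t, 0 < t < T -> derivable_pt_lim y t (y' t)) ->
  (forall t, 0 < t < T -> Rabs (y' t) <= a * y t) ->
  exists c, 0 < c /\ forall t, 0 <= t < T -> c <= y t.
Proof.
  intros HT Ha Hpos Hd Hbd.
  assert (Hs : 0 < T/2 < T) by lra.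
  exists (Rmin (y 0) (y (T/2) * exp (- (a * T)))). split.
  { apply Rmin_pos. apply Hpos; lra. apply Rmult_lt_0_compat. apply Hpos; lra. apply exp_pos. }
  intros t Ht.
  destruct (Req_dec t 0) as [->|Ht0]. apply Rmin_l.
  eapply Rle_trans; [apply Rmin_r|].
  assert (Hbd' : forall t, 0 < t < T -> Rabs (y' t) <= a * y t + 0) by (intros; rewrite Rplus_0_r; auto).
  pose proof (gron y y' a 0 T Ha (Rle_refl 0) Hd Hbd' t (T/2) ltac:(lra) Hs) as G.
  replace (0 / a) with 0 in G by (field; lra). rewrite !Rplus_0_r in G.
  assert (exp (a * Rabs (T/2 - t)) <= exp (a * T)).
  { destruct (Req_dec (a * Rabs (T/2 - t)) (a * T)) as [E|E]. rewrite E; lra.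
    apply Rlt_le, exp_increasing. apply Rmult_lt_compat_l; auto. apply Rabs_def1; lra. }
  assert (y (T/2) <= y t * exp (a * T)) by (eapply Rle_trans; [apply G|]; apply Rmult_le_compat_l; [apply Rlt_le, Hpos; lra| auto]).
  assert (E : exp (a * T) * exp (- (a * T)) = 1) by (rewrite <- exp_plus; replace (a * T + - (a * T)) with 0 by ring; apply exp_0).
  assert (0 < exp (- (a * T))) by apply exp_pos.
  replace (y t) with (y t * exp (a * T) * exp (- (a * T))) by (rewrite Rmult_assoc, E; ring).
  apply Rmult_le_compat_r; lra.
Qed.

Lemma qf_e3 X i : (i<3)%nat -> qf X (e3 i) (e3 i) = X i i.
Proof. intros Hi. unfold qf, e3, sum3. destruct i as [|[|[|]]]; try lia; simpl; ring. Qed.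
Definition eij (i j : nat) : vec := fun k => e3 i k + e3 j k.
Lemma qf_eij X i j : (i<3)%nat -> (j<3)%nat -> qf X (eij i j) (eij i j) = X i i + X i j + X j i + X j j.
Proof. intros Hi Hj. unfold qf, eij, e3, sum3. destruct i as [|[|[|]]]; destruct j as [|[|[|]]]; try lia; simpl; ring. Qed.
Lemma qf_e3v X i v : (i<3)%nat -> qf X (e3 i) v = sum3 (fun j => X i j * v j).
Proof. intros Hi. unfold qf, e3, sum3. destruct i as [|[|[|]]]; try lia; simpl; ring. Qed.
Lemma e3_nz i : (i<3)%nat -> nz (e3 i).
Proof. intros Hi. unfold nz, e3. destruct i as [|[|[|]]]; try lia; simpl; lra. Qed.

Lemma u0_ge1 g u : posdef3 g -> 1 <= u0 g u.
Proof. intros Hp. unfold u0. pose proof (posdef_nonneg g u Hp) as H. unfold qf in H.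
  apply Rle_trans with (sqrt 1); [rewrite sqrt_1; lra | apply sqrt_le_1_alt; lra]. Qed.

Lemma qf_e3e3 X i j : (i<3)%nat -> (j<3)%nat -> qf X (e3 i) (e3 j) = X i j.
Proof. intros Hi Hj. unfold qf, e3, sum3. destruct i as [|[|[|]]]; destruct j as [|[|[|]]]; try lia; simpl; ring. Qed.
Lemma abs_le_sq x c : 0 <= c -> x * x <= c * c -> Rabs x <= c.
Proof. intros Hc H. apply Rabs_le. split; destruct (Rle_dec 0 x); nra. Qed.

Lemma Rabs_m2 : Rabs (-2) = 2.
Proof. unfold Rabs; destruct (Rcase_abs (-2)); lra. Qed.

Lemma div_le1 a b : 0 < b -> a <= b -> a / b <= 1.
Proof. intros Hb H. apply Rmult_le_reg_r with b; auto. replace (a / b * b) with a by (field; lra). lra. Qed.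

Lemma le_div a x b : 0 < a -> a * x <= b -> x <= b / a.
Proof. intros Ha H. apply Rmult_le_reg_l with a; auto. replace (a * (b / a)) with b by (field; lra). auto. Qed.

Ltac dpl_leaf := first [ apply dpl_const | assumption | (match goal with H : forall i j, _ -> _ -> derivable_pt_lim _ _ _ |- _ => apply H; lia end)
  | (match goal with H : forall i, _ -> derivable_pt_lim _ _ _ |- _ => apply H; lia end) ].
Ltac dpl_auto := repeat first [ apply dpl_plus | apply dpl_minus | apply dpl_mult | dpl_leaf ].

Ltac bnd_leaf := first [ apply bo_const | assumption
  | (match goal with H : forall i j, _ -> _ -> bounded_on _ _ |- _ => apply H; lia end)
  | (match goal with H : forall i, _ -> bounded_on _ _ |- _ => apply H; lia end) ].
Ltac bnd := repeat first [ bnd_leaf | apply bo_plus | apply bo_minus | apply bo_mult | apply bo_div | apply bo_opp | apply bo_pow ].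

Theorem proposition5p1 (C : sconst) (Lam Tstar : R)
  (g K F : R -> mat) (E u Th0 : R -> vec) (Th00 rho e : R -> R) :
  bianchi_I_VIII C ->
  0 < Tstar ->
  solves_S C Lam Tstar g K F E u Th0 Th00 rho e ->
  (forall t, 0 <= t < Tstar ->
     sym3 (g t) /\ posdef3 (g t) /\ sym3 (K t) /\ antisym3 (F t) /\
     rho t > 0 /\ e t >= 0 /\ Th00 t >= 0 /\
     constraint1 C Lam (g t) (K t) (F t) (E t) (u t) (rho t) (Th00 t) /\
     constraint2 C (g t) (K t) (F t) (E t) (u t) (rho t) (Th0 t) /\
     constraint3 C (F t) /\
     constraint4 C (g t) (E t) (u t) (e t)) ->
  bounded_on (fun t => Hmc (g t) (K t)) Tstar ->
  mbounded_on g Tstar /\ mbounded_on K Tstar /\ mbounded_on F Tstar /\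
  vbounded_on E Tstar /\ vbounded_on u Tstar /\
  bounded_on Th00 Tstar /\ vbounded_on Th0 Tstar /\
  bounded_on rho Tstar /\ bounded_on e Tstar /\
  bounded_on (fun t => / det3 (g t)) Tstar /\
  bounded_on (fun t => u0 (g t) (u t)) Tstar /\
  bounded_on (fun t => / rho t) Tstar.
Proof.
  intros HB HT Hsol Hall HHb.
  pose proof HB as [HC [HJ _]].
  destruct Hsol as [Hs1 [Hs2 [HsTh00 [Hsrho Hse]]]].
  set (T := Tstar) in *.
  assert (Gs : forall t, 0 <= t < T -> sym3 (g t)) by (intros t Ht; apply (Hall t Ht)).
  assert (Gp : forall t, 0 <= t < T -> posdef3 (g t)) by (intros t Ht; apply (Hall t Ht)).
  assert (Ks : forall t, 0 <= t < T -> sym3 (K t)) by (intros t Ht; apply (Hall t Ht)).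
  assert (Fa : forall t, 0 <= t < T -> antisym3 (F t)) by (intros t Ht; apply (Hall t Ht)).
  assert (Rp : forall t, 0 <= t < T -> 0 < rho t) by (intros t Ht; apply (Hall t Ht)).
  assert (Ep : forall t, 0 <= t < T -> 0 <= e t) by (intros t Ht; apply Rge_le, (Hall t Ht)).
  assert (Thp : forall t, 0 <= t < T -> 0 <= Th00 t) by (intros t Ht; apply Rge_le, (Hall t Ht)).
  assert (C1h : forall t, 0 <= t < T -> constraint1 C Lam (g t) (K t) (F t) (E t) (u t) (rho t) (Th00 t)) by (intros t Ht; apply (Hall t Ht)).
  assert (C2h : forall t, 0 <= t < T -> constraint2 C (g t) (K t) (F t) (E t) (u t) (rho t) (Th0 t)) by (intros t Ht; apply (Hall t Ht)).
  assert (C4h : forall t, 0 <= t < T -> constraint4 C (g t) (E t) (u t) (e t)) by (intros t Ht; apply (Hall t Ht)).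
  assert (Dp : forall t, 0 <= t < T -> 0 < det3 (g t)) by (intros t Ht; apply (posdef_minors _ (Gs t Ht) (Gp t Ht))).
  assert (Dn : forall t, 0 <= t < T -> det3 (g t) <> 0) by (intros t Ht; pose proof (Dp t Ht); lra).
  assert (U1 : forall t, 0 <= t < T -> 1 <= u0 (g t) (u t)) by (intros t Ht; apply u0_ge1, Gp, Ht).
  assert (CEh : forall t, 0 <= t < T -> CE C (E t) = - e t * u0 (g t) (u t)) by (intros t Ht; pose proof (C4h t Ht) as H; unfold constraint4 in H; lra).
  destruct HHb as [MH HMH].
  assert (MH0 : 0 <= MH) by (pose proof (HMH 0 ltac:(lra)); pose proof (Rabs_pos (Hmc (g 0) (K 0))); lra).
  set (Qb := MH * MH + 2 * Rabs Lam).
  assert (PIp : 0 < PI) by apply PI_RGT_0.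
  assert (S1 : forall t, 0 <= t < T -> 0 <= kk (g t) (K t) <= Qb /\ 0 <= tau00 (g t) (E t) (F t) <= Qb / (16 * PI)
             /\ 0 <= T00 (g t) (u t) (rho t) (Th00 t) <= Qb / (16 * PI)).
  { intros t Ht.
    pose proof (R_nonpos C (g t) HB (Gs t Ht) (Gp t Ht)) as HR.
    destruct (kcs (g t) (K t) (e3 0) (Gs t Ht) (Gp t Ht) (Ks t Ht)) as [Hkk _].
    assert (Htau : 0 <= tau00 (g t) (E t) (F t)).
    { rewrite tau00_ident by auto. pose proof (posdef_nonneg _ (E t) (Gp t Ht)).
      pose proof (posdef_nonneg _ (fvec (F t)) (Gp t Ht)). pose proof (Dp t Ht).
      assert (0 <= qf (g t) (fvec (F t)) (fvec (F t)) / det3 (g t)) by (apply Rmult_le_pos; [lra| apply Rlt_le, Rinv_0_lt_compat; lra]). lra. }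
    assert (HT00 : 0 <= T00 (g t) (u t) (rho t) (Th00 t)).
    { unfold T00. pose proof (Rp t Ht). pose proof (Thp t Ht). pose proof (U1 t Ht).
      assert (0 <= rho t * (u0 (g t) (u t))^2) by (apply Rmult_le_pos; [lra| apply pow2_ge_0]). lra. }
    pose proof (C1h t Ht) as H1. unfold constraint1 in H1. fold (kk (g t) (K t)) in H1.
    pose proof (HMH t Ht) as Hh.
    assert (Hh2 : Hmc (g t) (K t) ^ 2 <= MH * MH).
    { rewrite <- (pow2_abs (Hmc (g t) (K t))). pose proof (Rabs_pos (Hmc (g t) (K t))). nra. }
    pose proof (Rle_abs Lam) as HL1. pose proof (Rle_abs (-Lam)) as HL2. rewrite Rabs_Ropp in HL2.
    set (X := tau00 (g t) (E t) (F t) + T00 (g t) (u t) (rho t) (Th00 t)) in *.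
    assert (HX : 0 <= 16 * PI * X) by (unfold X; apply Rmult_le_pos; lra).
    assert (Hx1 : 16 * PI * tau00 (g t) (E t) (F t) <= 16 * PI * X) by (unfold X; apply Rmult_le_compat_l; lra).
    assert (Hx2 : 16 * PI * T00 (g t) (u t) (rho t) (Th00 t) <= 16 * PI * X) by (unfold X; apply Rmult_le_compat_l; lra).
    assert (HQ : kk (g t) (K t) + 16 * PI * X <= Qb) by (unfold Qb; lra).
    repeat split; try lra; apply le_div; lra. }
  assert (DG : forall t, 0 < t < T -> forall i j, (i<3)%nat -> (j<3)%nat -> derivable_pt_lim (fun s => g s i j) t (rhs_g (K t) i j)).
  { intros t Ht i j Hi Hj. apply (deriv_int (fun s => g s i j) (fun s => rhs_g (K s) i j) T t); auto. apply (Hs1 i j Hi Hj). }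
  assert (DU : forall t, 0 < t < T -> forall i, (i<3)%nat -> derivable_pt_lim (fun s => u s i) t (rhs_u C (g t) (K t) (F t) (E t) (u t) (rho t) i)).
  { intros t Ht i Hi. apply (deriv_int (fun s => u s i) (fun s => rhs_u C (g s) (K s) (F s) (E s) (u s) (rho s) i) T t); auto. apply (Hs2 i Hi). }
  assert (DR : forall t, 0 < t < T -> derivable_pt_lim rho t (rhs_rho C (g t) (K t) (E t) (u t) (rho t))).
  { intros t Ht. apply (deriv_int rho (fun s => rhs_rho C (g s) (K s) (E s) (u s) (rho s)) T t); auto. apply Hsrho. }
  assert (DE : forall t, 0 < t < T -> derivable_pt_lim e t (rhs_e C (g t) (K t) (E t) (u t) (rho t) (e t))).
  { intros t Ht. apply (deriv_int e (fun s => rhs_e C (g s) (K s) (E s) (u s) (rho s) (e s)) T t); auto. apply Hse. }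
  assert (DDet : forall t, 0 < t < T -> derivable_pt_lim (fun s => det3 (g s)) t (-2 * Hmc (g t) (K t) * det3 (g t))).
  { intros t Ht. pose proof (DG t Ht) as Hd. assert (Ht' : 0 <= t < T) by lra.
    eapply dpl_eq. { unfold det3, sum3. dpl_auto. }
    transitivity (-2 * sum3 (fun i => sum3 (fun j => sum3 (fun k => eps3 i j k * (K t 0%nat i * g t 1%nat j * g t 2%nat k + g t 0%nat i * K t 1%nat j * g t 2%nat k + g t 0%nat i * g t 1%nat j * K t 2%nat k))))).
    { unfold rhs_g, sum3. ring. }
    rewrite det_ident by auto. ring. }
  assert (Dbd : forall t, 0 < t < T -> Rabs (-2 * Hmc (g t) (K t) * det3 (g t)) <= (2 * MH + 1) * det3 (g t)).
  { intros t Ht. assert (Ht' : 0 <= t < T) by lra. pose proof (Dp t Ht'). pose proof (HMH t Ht').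
    rewrite !Rabs_mult. rewrite (Rabs_right (det3 (g t))) by lra. rewrite Rabs_m2.
    pose proof (Rabs_pos (Hmc (g t) (K t))). nra. }
  destruct (gron_up (fun s => det3 (g s)) _ (2 * MH + 1) 0 T HT ltac:(lra) ltac:(lra) DDet
     ltac:(intros; rewrite Rplus_0_r; apply Dbd; auto)) as [Dh HDh].
  destruct (gron_low (fun s => det3 (g s)) _ (2 * MH + 1) T HT ltac:(lra) Dp DDet Dbd) as [Dl [HDl0 HDl]].
  assert (Gd : forall t, 0 <= t < T -> forall i, (i<3)%nat -> 0 < g t i i).
  { intros t Ht i Hi. rewrite <- qf_e3 by auto. apply (Gp t Ht), e3_nz, Hi. }
  assert (Kd : forall t, 0 <= t < T -> forall v, Rabs (qf (K t) v v) <= (Qb + 1) * qf (g t) v v).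
  { intros t Ht v. destruct (kcs (g t) (K t) v (Gs t Ht) (Gp t Ht) (Ks t Ht)) as [Hk1 Hk2].
    pose proof (posdef_nonneg _ v (Gp t Ht)).
    apply abs_le_of_sq; [unfold Qb; pose proof (Rabs_pos Lam); nra | auto |].
    destruct (S1 t Ht) as [[_ Hq] _]. eapply Rle_trans; [apply Hk2|]. apply Rmult_le_compat_r; [nra|auto]. }
  set (tr := fun s => g s 0%nat 0%nat + g s 1%nat 1%nat + g s 2%nat 2%nat).
  assert (Dtr : forall t, 0 < t < T -> derivable_pt_lim tr t (rhs_g (K t) 0%nat 0%nat + rhs_g (K t) 1%nat 1%nat + rhs_g (K t) 2%nat 2%nat)).
  { intros t Ht. pose proof (DG t Ht) as Hd. unfold tr. dpl_auto. }
  assert (Trbd : forall t, 0 < t < T -> Rabs (rhs_g (K t) 0%nat 0%nat + rhs_g (K t) 1%nat 1%nat + rhs_g (K t) 2%nat 2%nat) <= 2 * (Qb + 1) * tr t + 0).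
  { intros t Ht. assert (Ht' : 0 <= t < T) by lra. unfold rhs_g, tr.
    pose proof (Kd t Ht' (e3 0)) as K0. pose proof (Kd t Ht' (e3 1)) as K1. pose proof (Kd t Ht' (e3 2)) as K2.
    rewrite !qf_e3 in K0, K1, K2 by lia.
    replace (-2 * K t 0%nat 0%nat + -2 * K t 1%nat 1%nat + -2 * K t 2%nat 2%nat) with (-2 * (K t 0%nat 0%nat + K t 1%nat 1%nat + K t 2%nat 2%nat)) by ring.
    rewrite Rabs_mult, Rabs_m2.
    pose proof (Rabs_triang (K t 0%nat 0%nat + K t 1%nat 1%nat) (K t 2%nat 2%nat)).
    pose proof (Rabs_triang (K t 0%nat 0%nat) (K t 1%nat 1%nat)). lra. }
  destruct (gron_up tr _ (2 * (Qb + 1)) 0 T HT ltac:(unfold Qb; pose proof (Rabs_pos Lam); nra) ltac:(lra) Dtr Trbd) as [TrB HTrB].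
  assert (Gb : forall t, 0 <= t < T -> forall i j, (i<3)%nat -> (j<3)%nat -> Rabs (g t i j) <= TrB).
  { intros t Ht i j Hi Hj. pose proof (cs_g (g t) (e3 i) (e3 j) (Gs t Ht) (Gp t Ht)) as H.
    rewrite !qf_e3e3 in H by auto. pose proof (HTrB t Ht) as Htr. unfold tr in Htr.
    pose proof (Gd t Ht 0%nat ltac:(lia)). pose proof (Gd t Ht 1%nat ltac:(lia)). pose proof (Gd t Ht 2%nat ltac:(lia)).
    assert (Hi' : g t i i <= TrB) by (destruct i as [|[|[|]]]; try lia; lra).
    assert (Hj' : g t j j <= TrB) by (destruct j as [|[|[|]]]; try lia; lra).
    pose proof (Gd t Ht i Hi). pose proof (Gd t Ht j Hj).
    apply abs_le_sq. lra. eapply Rle_trans. apply H. apply Rmult_le_compat; lra. }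
  assert (Bg : forall i j, (i<3)%nat -> (j<3)%nat -> bounded_on (fun t => g t i j) T).
  { intros i j Hi Hj. exists TrB. intros t Ht. apply Gb; auto. }
  assert (Binvdet : bounded_on (fun t => / det3 (g t)) T) by (apply (bo_inv _ T Dl); auto).
  assert (Bginv : forall i j, (i<3)%nat -> (j<3)%nat -> bounded_on (fun t => ginv (g t) i j) T).
  { intros i j Hi Hj. apply (bo_ext _ (fun t => cofm (g t) i j / det3 (g t))).
    { intros t Ht. apply ginv_cof; auto. }
    destruct i as [|[|[|]]]; destruct j as [|[|[|]]]; try lia; unfold cofm; cbv zeta beta iota; bnd. }
  assert (Q1p : 0 < Qb + 1) by (unfold Qb; pose proof (Rabs_pos Lam); nra).
  assert (Kb : forall t, 0 <= t < T -> forall i j, (i<3)%nat -> (j<3)%nat -> Rabs (K t i j) <= 3 * (Qb + 1) * TrB).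
  { intros t Ht i j Hi Hj.
    pose proof (Kd t Ht (eij i j)) as H1. rewrite !qf_eij in H1 by auto.
    pose proof (Kd t Ht (e3 i)) as H2. pose proof (Kd t Ht (e3 j)) as H3. rewrite !qf_e3 in H2, H3 by auto.
    rewrite (Ks t Ht j i) in H1 by auto. rewrite (Gs t Ht j i) in H1 by auto.
    pose proof (Gb t Ht i i Hi Hi). pose proof (Gb t Ht j j Hj Hj). pose proof (Gb t Ht i j Hi Hj).
    pose proof (Gd t Ht i Hi). pose proof (Gd t Ht j Hj).
    assert (A1 : (Qb + 1) * (g t i i + g t i j + g t i j + g t j j) <= (Qb + 1) * (4 * TrB)).
    { apply Rmult_le_compat_l. lra. pose proof (Rle_abs (g t i j)). pose proof (Rle_abs (g t i i)). pose proof (Rle_abs (g t j j)). lra. }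
    assert (A2 : (Qb + 1) * g t i i <= (Qb + 1) * TrB) by (apply Rmult_le_compat_l; [lra|]; pose proof (Rle_abs (g t i i)); lra).
    assert (A3 : (Qb + 1) * g t j j <= (Qb + 1) * TrB) by (apply Rmult_le_compat_l; [lra|]; pose proof (Rle_abs (g t j j)); lra).
    set (S4 := K t i i + K t i j + K t i j + K t j j) in *.
    assert (E2 : 2 * K t i j = S4 + - K t i i + - K t j j) by (unfold S4; ring).
    assert (A4 : Rabs (2 * K t i j) <= 6 * (Qb + 1) * TrB).
    { rewrite E2. eapply Rle_trans. apply Rabs_triang. rewrite Rabs_Ropp.
      pose proof (Rabs_triang S4 (- K t i i)) as T1. rewrite Rabs_Ropp in T1. lra. }
    rewrite Rabs_mult, (Rabs_right 2) in A4 by lra. lra. }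
  assert (BK : forall i j, (i<3)%nat -> (j<3)%nat -> bounded_on (fun t => K t i j) T).
  { intros i j Hi Hj. exists (3 * (Qb + 1) * TrB). intros t Ht. apply Kb; auto. }
  set (tb := Qb / (16 * PI)).
  assert (tbp : 0 <= tb) by (unfold tb, Qb; apply Rmult_le_pos; [pose proof (Rabs_pos Lam); nra | apply Rlt_le, Rinv_0_lt_compat; lra]).
  assert (QEE : forall t, 0 <= t < T -> qf (g t) (E t) (E t) <= 2 * tb /\ qf (g t) (fvec (F t)) (fvec (F t)) <= 2 * tb * Dh).
  { intros t Ht. destruct (S1 t Ht) as [_ [Htau _]]. rewrite tau00_ident in Htau by auto.
    pose proof (posdef_nonneg _ (E t) (Gp t Ht)). pose proof (posdef_nonneg _ (fvec (F t)) (Gp t Ht)).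
    pose proof (Dp t Ht). pose proof (HDh t Ht).
    set (a := qf (g t) (fvec (F t)) (fvec (F t))) in *. set (D := det3 (g t)) in *.
    assert (0 <= a / D) by (apply Rmult_le_pos; [lra| apply Rlt_le, Rinv_0_lt_compat; lra]).
    split. fold tb in Htau. lra.
    assert (a / D <= 2 * tb) by (fold tb in Htau; lra).
    assert (a = a / D * D) by (field; lra).
    assert (a / D * D <= 2 * tb * Dh) by (apply Rmult_le_compat; lra). lra. }
  assert (GVb : forall t v B, 0 <= t < T -> qf (g t) v v <= B -> forall i, (i<3)%nat ->
     Rabs (sum3 (fun j => g t i j * v j)) <= TrB * B + 1).
  { intros t v B Ht HBv i Hi. rewrite <- qf_e3v by auto. apply sq_bound.
    pose proof (cs_g (g t) (e3 i) v (Gs t Ht) (Gp t Ht)). rewrite qf_e3 in H by auto.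
    pose proof (Gd t Ht i Hi). pose proof (Gb t Ht i i Hi Hi). pose proof (Rle_abs (g t i i)).
    pose proof (posdef_nonneg _ v (Gp t Ht)).
    eapply Rle_trans. apply H. apply Rmult_le_compat; lra. }
  assert (BGE : forall i, (i<3)%nat -> bounded_on (fun t => sum3 (fun j => g t i j * E t j)) T).
  { intros i Hi. exists (TrB * (2 * tb) + 1). intros t Ht. apply GVb; auto. apply QEE; auto. }
  assert (BE : forall k, (k<3)%nat -> bounded_on (fun t => E t k) T).
  { intros k Hk. apply (bo_ext _ (fun t => sum3 (fun i => ginv (g t) k i * sum3 (fun j => g t i j * E t j)))).
    { intros t Ht. apply vec_recover; auto. }
    unfold sum3 at 1. bnd. }
  assert (BGf : forall i, (i<3)%nat -> bounded_on (fun t => sum3 (fun j => g t i j * fvec (F t) j)) T).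
  { intros i Hi. exists (TrB * (2 * tb * Dh) + 1). intros t Ht. apply GVb; auto. apply QEE; auto. }
  assert (Bf : forall k, (k<3)%nat -> bounded_on (fun t => fvec (F t) k) T).
  { intros k Hk. apply (bo_ext _ (fun t => sum3 (fun i => ginv (g t) k i * sum3 (fun j => g t i j * fvec (F t) j)))).
    { intros t Ht. apply vec_recover; auto. }
    unfold sum3 at 1. bnd. }
  assert (BF : forall i j, (i<3)%nat -> (j<3)%nat -> bounded_on (fun t => F t i j) T).
  { intros i j Hi Hj.
    pose proof (Bf 0%nat ltac:(lia)) as f0. pose proof (Bf 1%nat ltac:(lia)) as f1. pose proof (Bf 2%nat ltac:(lia)) as f2.
    unfold fvec in f0, f1, f2.
    destruct i as [|[|[|]]]; destruct j as [|[|[|]]]; try lia; auto.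
    all: first [ apply (bo_ext _ (fun _ => 0)); [intros t Ht; destruct (asym_e _ (Fa t Ht)) as [a1 [a2 [a3 [a4 [a5 a6]]]]]; solve [auto] | apply bo_const]
               | match goal with |- bounded_on (fun s => ?FF s ?i ?j) _ =>
                   apply (bo_ext _ (fun s => - FF s j i)); [intros t Ht; rewrite (Fa t Ht j i) by lia; ring | apply bo_opp; auto] end ]. }
  assert (TR : forall t, 0 <= t < T -> Th00 t <= tb /\ rho t <= 3/4 * tb).
  { intros t Ht. destruct (S1 t Ht) as [_ [_ HT0]]. fold tb in HT0. unfold T00 in HT0.
    pose proof (Thp t Ht). pose proof (Rp t Ht). pose proof (U1 t Ht).
    assert (HU2 : 1 <= u0 (g t) (u t) ^ 2) by nra.
    assert (rho t * 1 <= rho t * u0 (g t) (u t) ^ 2) by (apply Rmult_le_compat_l; lra).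
    lra. }
  assert (BTh00 : bounded_on Th00 T) by (apply (bo_le _ T tb); intros t Ht; split; [apply Thp; auto | apply TR; auto]).
  assert (Brho : bounded_on rho T) by (apply (bo_le _ T (3/4 * tb)); intros t Ht; split; [apply Rlt_le, Rp; auto | apply TR; auto]).
  set (w := fun s => e s / rho s).
  assert (Wp : forall t, 0 <= t < T -> 0 <= w t).
  { intros t Ht. unfold w. pose proof (Ep t Ht). pose proof (Rp t Ht). apply Rmult_le_pos; [lra| apply Rlt_le, Rinv_0_lt_compat; lra]. }
  assert (Dw : forall t, 0 < t < T -> derivable_pt_lim w t (3 / (4 * u0 (g t) (u t)) * w t)).
  { intros t Ht. assert (Ht' : 0 <= t < T) by lra. pose proof (Rp t Ht'). pose proof (U1 t Ht').
    eapply dpl_eq. { apply dpl_div. apply DE; auto. apply DR; auto. lra. }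
    unfold w. apply w_ident; try lra. apply CEh; auto. }
  assert (Wbd : forall t, 0 < t < T -> Rabs (3 / (4 * u0 (g t) (u t)) * w t) <= 1 * w t + 0).
  { intros t Ht. assert (Ht' : 0 <= t < T) by lra. pose proof (Wp t Ht'). pose proof (U1 t Ht').
    assert (0 <= 3 / (4 * u0 (g t) (u t)) <= 1).
    { split. apply Rmult_le_pos; [lra| apply Rlt_le, Rinv_0_lt_compat; lra].
      apply div_le1; lra. }
    rewrite Rabs_right by (apply Rle_ge, Rmult_le_pos; lra). nra. }
  destruct (gron_up w _ 1 0 T HT ltac:(lra) ltac:(lra) Dw Wbd) as [WB HWB].
  assert (Bw : bounded_on w T) by (apply (bo_le _ T WB); intros t Ht; split; [apply Wp; auto | apply HWB; auto]).
  (* Step 9: V = u0^2 *)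
  set (V := fun s => 1 + sum3 (fun i => sum3 (fun j => g s i j * u s i * u s j))).
  assert (DV : forall t, 0 < t < T -> derivable_pt_lim V t (2 * qf (K t) (u t) (u t) - 3/2 * w t * qf (g t) (u t) (E t))).
  { intros t Ht. assert (Ht' : 0 <= t < T) by lra. pose proof (DG t Ht) as Hd1. pose proof (DU t Ht) as Hd2.
    pose proof (Rp t Ht'). pose proof (U1 t Ht').
    eapply dpl_eq. { unfold V, sum3. dpl_auto. }
    transitivity (sum3 (fun i => sum3 (fun j => rhs_g (K t) i j * u t i * u t j)) +
       2 * sum3 (fun i => sum3 (fun j => g t i j * u t i * rhs_u C (g t) (K t) (F t) (E t) (u t) (rho t) j))).
    { pose proof (Gs t Ht') as Hsg. clear - Hsg. unfold sum3. symrw (g t) Hsg. ring. }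
    rewrite (V_ident C (g t) (K t) (F t) (E t) (u t) (rho t) (e t) HC (Gs t Ht') (Fa t Ht') (Dn t Ht') ltac:(lra) ltac:(lra) (CEh t Ht')).
    unfold rhs_g, qf, w, sum3. field. lra. }
  assert (qgu : forall t, 0 <= t < T -> 0 <= qf (g t) (u t) (u t)) by (intros t Ht; apply posdef_nonneg, Gp, Ht).
  assert (Vbd : forall t, 0 < t < T -> Rabs (2 * qf (K t) (u t) (u t) - 3/2 * w t * qf (g t) (u t) (E t)) <= (2 * (Qb + 1) + WB) * V t + WB * (2 * tb)).
  { intros t Ht. assert (Ht' : 0 <= t < T) by lra.
    assert (EV : V t = 1 + qf (g t) (u t) (u t)) by reflexivity. rewrite EV.
    pose proof (Kd t Ht' (u t)) as K1. pose proof (qgu t Ht') as Q0.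
    destruct (QEE t Ht') as [QE _]. pose proof (posdef_nonneg _ (E t) (Gp t Ht')) as QE0.
    pose proof (cs_g (g t) (u t) (E t) (Gs t Ht') (Gp t Ht')) as CS.
    assert (AB : Rabs (qf (g t) (u t) (E t)) <= (qf (g t) (u t) (u t) + qf (g t) (E t) (E t)) / 2).
    { set (a := qf (g t) (u t) (u t)) in *. set (b := qf (g t) (E t) (E t)) in *.
      assert (HAM : a * b <= (a + b) / 2 * ((a + b) / 2)) by (pose proof (Rle_0_sqr (a - b)); unfold Rsqr in *; nra).
      apply abs_le_sq. lra. lra. }
    pose proof (Wp t Ht') as W0. pose proof (HWB t Ht') as W1.
    eapply Rle_trans. unfold Rminus. apply Rabs_triang. rewrite Rabs_Ropp, !Rabs_mult.
    rewrite (Rabs_right 2) by lra. rewrite (Rabs_right (3/2)) by lra. rewrite (Rabs_right (w t)) by lra.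
    assert (w t * Rabs (qf (g t) (u t) (E t)) <= WB * ((qf (g t) (u t) (u t) + qf (g t) (E t) (E t)) / 2)).
    { apply Rmult_le_compat; try lra. apply Rabs_pos. }
    assert ((Qb + 1) * qf (g t) (u t) (u t) <= (Qb + 1) * (1 + qf (g t) (u t) (u t))) by (apply Rmult_le_compat_l; lra).
    assert (0 <= WB) by lra.
    assert (WB * qf (g t) (E t) (E t) <= WB * (2 * tb)) by (apply Rmult_le_compat_l; lra).
    assert (WB * qf (g t) (u t) (u t) <= WB * (1 + qf (g t) (u t) (u t))) by (apply Rmult_le_compat_l; lra).
    nra. }
  assert (WB0 : 0 <= WB) by (pose proof (Wp 0 ltac:(lra)); pose proof (HWB 0 ltac:(lra)); lra).
  destruct (gron_up V _ (2 * (Qb + 1) + WB) (WB * (2 * tb)) T HT ltac:(lra) ltac:(apply Rmult_le_pos; lra) DV Vbd) as [VB HVB].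
  assert (BGU : forall i, (i<3)%nat -> bounded_on (fun t => sum3 (fun j => g t i j * u t j)) T).
  { intros i Hi. exists (TrB * VB + 1). intros t Ht. apply GVb; auto.
    pose proof (HVB t Ht). unfold V in H. unfold qf. lra. }
  assert (Bu : forall k, (k<3)%nat -> bounded_on (fun t => u t k) T).
  { intros k Hk. apply (bo_ext _ (fun t => sum3 (fun i => ginv (g t) k i * sum3 (fun j => g t i j * u t j)))).
    { intros t Ht. apply vec_recover; auto. }
    unfold sum3 at 1. bnd. }
  assert (Bu0 : bounded_on (fun t => u0 (g t) (u t)) T).
  { apply (bo_le _ T VB). intros t Ht. pose proof (U1 t Ht). split. lra.
    pose proof (HVB t Ht). unfold V in H0.
    assert (E1 : u0 (g t) (u t) * u0 (g t) (u t) = V t).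
    { unfold u0, V. apply sqrt_sqrt. pose proof (qgu t Ht). unfold qf in H1. lra. }
    unfold V in E1. nra. }
  assert (Biu0 : bounded_on (fun t => / u0 (g t) (u t)) T) by (apply (bo_inv _ T 1); auto; lra).
  assert (Biu04 : bounded_on (fun t => / (4 * u0 (g t) (u t))) T) by (apply (bo_inv _ T 4); [lra| intros t Ht; pose proof (U1 t Ht); lra]).
  assert (Biu02 : bounded_on (fun t => / (u0 (g t) (u t) ^ 2)) T) by (apply (bo_inv _ T 1); [lra| intros t Ht; pose proof (U1 t Ht); nra]).
  assert (BH : bounded_on (fun t => Hmc (g t) (K t)) T) by (exists MH; auto).
  assert (DRc : forall t, 0 < t < T -> derivable_pt_lim rho t (rcoef C (g t) (K t) (E t) (u t) (rho t) (e t) * rho t)).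
  { intros t Ht. assert (Ht' : 0 <= t < T) by lra. pose proof (Rp t Ht'). pose proof (U1 t Ht').
    eapply dpl_eq. apply DR; auto. apply rho_ident; try lra. apply CEh; auto. }
  assert (Brc : bounded_on (fun t => rcoef C (g t) (K t) (E t) (u t) (rho t) (e t)) T).
  { unfold rcoef, qf, sum3. bnd. }
  destruct Brc as [RB HRB].
  assert (RB0 : 0 <= RB) by (pose proof (HRB 0 ltac:(lra)); pose proof (Rabs_pos (rcoef C (g 0) (K 0) (E 0) (u 0) (rho 0) (e 0))); lra).
  assert (Rbd : forall t, 0 < t < T -> Rabs (rcoef C (g t) (K t) (E t) (u t) (rho t) (e t) * rho t) <= (RB + 1) * rho t).
  { intros t Ht. assert (Ht' : 0 <= t < T) by lra. pose proof (Rp t Ht'). pose proof (HRB t Ht').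
    rewrite Rabs_mult, (Rabs_right (rho t)) by lra. nra. }
  destruct (gron_low rho _ (RB + 1) T HT ltac:(lra) Rp DRc Rbd) as [rl [Hrl0 Hrl]].
  assert (Birho : bounded_on (fun t => / rho t) T) by (apply (bo_inv _ T rl); auto).
  assert (Be : bounded_on e T).
  { apply (bo_ext _ (fun t => w t * rho t)). { intros t Ht. unfold w. pose proof (Rp t Ht). field. lra. }
    apply bo_mult; auto. }
  assert (BGT : forall j, (j<3)%nat -> bounded_on (fun t => sum3 (fun k => g t j k * Th0 t k)) T).
  { intros j Hj. apply (bo_ext _ (fun t => divK C (g t) (K t) j / (8 * PI) + tau0 (E t) (F t) j
        - 4/3 * rho t * u0 (g t) (u t) * lowr (g t) (u t) j)).
    { intros t Ht. pose proof (C2h t Ht j Hj) as H. unfold T0 in H. rewrite H. field. lra. }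
    unfold divK, gam, tau0, lowr, sum3. bnd. }
  assert (BTh0 : forall k, (k<3)%nat -> bounded_on (fun t => Th0 t k) T).
  { intros k Hk. apply (bo_ext _ (fun t => sum3 (fun i => ginv (g t) k i * sum3 (fun j => g t i j * Th0 t j)))).
    { intros t Ht. apply vec_recover; auto. }
    unfold sum3 at 1. bnd. }
  split; [exact Bg|]. split; [exact BK|]. split; [exact BF|]. split; [exact BE|]. split; [exact Bu|].
  split; [exact BTh00|]. split; [exact BTh0|]. split; [exact Brho|]. split; [exact Be|].
  split; [exact Binvdet|]. split; [exact Bu0|]. exact Birho.
Qed.
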